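(* (1) For every étale topological category $C$, the restriction quantal frame $\Omega(C)$ is spatial. (2) For every restriction quantal frame $Q$, the étale topological category $\mathsf{C}(Q)$ is sober.
   Context: A restriction quantal frame is a frame $(Q,\le)$ with associative multiplication distributing over arbitrary joins on both sides, which is a monoid with identity $e$ and carries join-preserving unary operations $a\mapsto a^{\ast}$, $a\mapsto a^{+}$ with values in the set $e^{\downarrow}=\{x:x\le e\}$ of projections (a commutative subsemigroup of idempotents), fixing projections, with $aa^{\ast}=a$, $a^{+}a=a$, $(ab)^{\ast}=(a^{\ast}b)^{\ast}$, $(ab)^{+}=(ab^{+})^{+}$; the top element is a join of partial isometries ($a$ with $b\le a\Rightarrow b=b^{+}a=ab^{\ast}$) and partial isometries are closed under product. Étale topological category: small category with topology making $\mathbf{d}$, $\mathbf{r}$, and multiplication on composable pairs continuous, with $\mathbf{d}$, $\mathbf{r}$ local homeomorphisms. $\Omega(C)$: open subsets of $C$ with $UV=\{uv:u\in U,v\in V,\mathbf{d}(u)=\mathbf{r}(v)\}$, identity the identity space $C_o$, $U^{\ast}=\mathbf{d}(U)$, $U^{+}=\mathbf{r}(U)$. $\mathsf{C}(Q)$: the category of completely prime filters of $Q$ (nonempty, upward closed, closed under binary meets, $0\notin A$, $\bigvee_ia_i\in A\Rightarrow$ some $a_i\in A$) with $\mathbf{d}(A)=(\{a^{\ast}:a\in A\})^{\uparrow}$, $\mathbf{r}(A)=(\{a^{+}:a\in A\})^{\uparrow}$, $A\cdot B=(AB)^{\uparrow}$ when $\mathbf{d}(A)=\mathbf{r}(B)$,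 topology with base $\mathscr{X}_a=\{A:a\in A\}$, $a$ a partial isometry. $Q$ is spatial if $\chi\colon Q\to\Omega(\mathsf{C}(Q))$, $a\mapsto\mathscr{X}_a$, is an isomorphism; $C$ is sober if $\omega\colon C\to\mathsf{C}(\Omega(C))$, $x\mapsto\{\text{open sets containing }x\}$, is an isomorphism of categories and a homeomorphism. *)

(* Defs.v *)
From Stdlib Require Import Classical ClassicalEpsilon FunctionalExtensionality
  PropExtensionality ProofIrrelevance.

Definition is_topology {X : Type} (O : (X -> Prop) -> Prop) : Prop :=
  (forall F : (X -> Prop) -> Prop, (forall U, F U -> O U) ->
      O (fun x => exists U, F U /\ U x)) /\
  (forall U V, O U -> O V -> O (fun x => U x /\ V x)) /\
  O (fun _ => True).

Definition gen_topology {X : Type} (B : (X -> Prop) -> Prop) : (X -> Prop) -> Prop :=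
  fun S => forall O, is_topology O -> (forall U, B U -> O U) -> O S.

Lemma gen_topology_is_topology {X : Type} (B : (X -> Prop) -> Prop) :
  is_topology (gen_topology B).
Proof.
  split; [|split].
  - intros F HF O HO HB. apply (proj1 HO). intros U HU. exact (HF U HU O HO HB).
  - intros U V HU HV O HO HB.
    apply (proj1 (proj2 HO)); [apply HU|apply HV]; auto.
  - intros O HO HB. exact (proj2 (proj2 HO)).
Qed.

(* A small category given by its set of arrows [tc_car] with domain [tc_d]
   and range [tc_r] (identities are the arrows x with d x = x) and the
   composition relation [tc_mul x y z] meaning "z = x y" (defined only for
   composable pairs, see [is_category]); together with a topology. *)
Record TopCat := {
  tc_car : Type;
  tc_open : (tc_car -> Prop) -> Prop;
  tc_open_top : is_topology tc_open;
  tc_d : tc_car -> tc_car;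
  tc_r : tc_car -> tc_car;
  tc_mul : tc_car -> tc_car -> tc_car -> Prop
}.

Lemma tc_open_empty (C : TopCat) : tc_open C (fun _ => False).
Proof.
  destruct (tc_open_top C) as [H1 _].
  assert (E : (fun _ : tc_car C => False) =
              (fun x => exists U, (fun _ : tc_car C -> Prop => False) U /\ U x)).
  { apply functional_extensionality; intro x; apply propositional_extensionality.
    split; [intros []|intros [U [[] _]]]. }
  rewrite E. apply H1. intros U [].
Qed.

Definition is_category (C : TopCat) : Prop :=
  let d := tc_d C in let r := tc_r C in let m := tc_mul C in
  (forall x, d (d x) = d x /\ r (d x) = d x /\ d (r x) = r x /\ r (r x) = r x) /\
  (forall x y z, m x y z -> d x = r y) /\
  (forall x y, d x = r y -> exists z, m x y z) /\
  (forall x y z z', m x y z -> m x y z' -> z = z') /\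
  (forall x y z, m x y z -> d z = d y /\ r z = r x) /\
  (forall x, m x (d x) x /\ m (r x) x x) /\
  (forall x y w u v, m x y u -> m u w v -> exists t, m y w t /\ m x t v) /\
  (forall x y w t v, m y w t -> m x t v -> exists u, m x y u /\ m u w v).

Definition tc_continuous (C : TopCat) (f : tc_car C -> tc_car C) : Prop :=
  forall V, tc_open C V -> tc_open C (fun x => V (f x)).

(* f : C -> C is a local homeomorphism: continuous, and every point has an
   open neighbourhood U on which f is injective and maps opens contained in U
   to opens (i.e. f|U is a homeomorphism onto the open set f(U)). *)
Definition tc_local_homeo (C : TopCat) (f : tc_car C -> tc_car C) : Prop :=
  tc_continuous C f /\
  forall x, exists U, tc_open C U /\ U x /\
    (forall y z, U y -> U z -> f y = f z -> y = z) /\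
    (forall V, tc_open C V -> (forall y, V y -> U y) ->
       tc_open C (fun w => exists y, V y /\ w = f y)).

(* continuity of multiplication on the space of composable pairs
   (subspace of the product topology) *)
Definition tc_mul_continuous (C : TopCat) : Prop :=
  forall W, tc_open C W -> forall x y z, tc_mul C x y z -> W z ->
    exists U V, tc_open C U /\ tc_open C V /\ U x /\ V y /\
      (forall u v w, U u -> V v -> tc_mul C u v w -> W w).

Definition is_etale (C : TopCat) : Prop :=
  is_category C /\
  tc_continuous C (tc_d C) /\ tc_continuous C (tc_r C) /\
  tc_mul_continuous C /\
  tc_local_homeo C (tc_d C) /\ tc_local_homeo C (tc_r C).

Record QF := {
  q_car : Type;
  q_le : q_car -> q_car -> Prop;
  q_mul : q_car -> q_car -> q_car;
  q_e : q_car;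
  q_star : q_car -> q_car;
  q_plus : q_car -> q_car
}.

Section QFdefs.
Variable Q : QF.
Local Notation le := (q_le Q).
Local Notation mul := (q_mul Q).
Local Notation e := (q_e Q).
Local Notation star := (q_star Q).
Local Notation plus := (q_plus Q).

Definition is_lub (S : q_car Q -> Prop) (j : q_car Q) : Prop :=
  (forall s, S s -> le s j) /\ (forall u, (forall s, S s -> le s u) -> le j u).

Definition is_meet (a b m : q_car Q) : Prop :=
  le m a /\ le m b /\ (forall u, le u a -> le u b -> le u m).

Definition partial_isometry (a : q_car Q) : Prop :=
  forall b, le b a -> b = mul (plus b) a /\ b = mul a (star b).

Definition is_RQF : Prop :=
  (forall a, le a a) /\
  (forall a b c, le a b -> le b c -> le a c) /\
  (forall a b, le a b -> le b a -> a = b) /\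
  (forall S, exists j, is_lub S j) /\
  (forall a S j m, is_lub S j -> is_meet a j m ->
      is_lub (fun x => exists s, S s /\ is_meet a s x) m) /\
  (forall a b c, mul (mul a b) c = mul a (mul b c)) /\
  (forall a, mul e a = a /\ mul a e = a) /\
  (forall a S j, is_lub S j ->
      is_lub (fun x => exists s, S s /\ x = mul a s) (mul a j) /\
      is_lub (fun x => exists s, S s /\ x = mul s a) (mul j a)) /\
  (forall S j, is_lub S j ->
      is_lub (fun x => exists s, S s /\ x = star s) (star j) /\
      is_lub (fun x => exists s, S s /\ x = plus s) (plus j)) /\
  (forall a, le (star a) e /\ le (plus a) e) /\
  (forall p, le p e -> star p = p /\ plus p = p) /\
  (forall p q, le p e -> le q e -> le (mul p q) e /\ mul p q = mul q p /\ mul p p = p) /\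
  (forall a, mul a (star a) = a /\ mul (plus a) a = a) /\
  (forall a b, star (mul a b) = star (mul (star a) b) /\
               plus (mul a b) = plus (mul a (plus b))) /\
  (forall t, (forall x, le x t) -> is_lub partial_isometry t) /\
  (forall a b, partial_isometry a -> partial_isometry b -> partial_isometry (mul a b)).

Definition is_cpfilter (A : q_car Q -> Prop) : Prop :=
  (exists a, A a) /\
  (forall a b, A a -> le a b -> A b) /\
  (forall a b m, A a -> A b -> is_meet a b m -> A m) /\
  (forall z, (forall x, le z x) -> ~ A z) /\
  (forall S j, is_lub S j -> A j -> exists s, S s /\ A s).

Definition cpf : Type := { A : q_car Q -> Prop | is_cpfilter A }.

Definition upclose (S : q_car Q -> Prop) : q_car Q -> Prop :=
  fun x => exists s, S s /\ le s x.

(* S as a completely prime filter when it is one (junk value dflt otherwise;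
   for a restriction quantal frame the junk branch is never used) *)
Definition mkcpf (S : q_car Q -> Prop) (dflt : cpf) : cpf :=
  match excluded_middle_informative (is_cpfilter S) with
  | left H => exist _ S H
  | right _ => dflt
  end.

Definition cpf_d (A : cpf) : cpf :=
  mkcpf (upclose (fun x => exists a, proj1_sig A a /\ x = star a)) A.
Definition cpf_r (A : cpf) : cpf :=
  mkcpf (upclose (fun x => exists a, proj1_sig A a /\ x = plus a)) A.
Definition cpf_mul (A B Z : cpf) : Prop :=
  cpf_d A = cpf_r B /\
  proj1_sig Z = upclose (fun x => exists a b, proj1_sig A a /\ proj1_sig B b /\ x = mul a b).

Definition Xset (a : q_car Q) : cpf -> Prop := fun A => proj1_sig A a.

End QFdefs.

Definition Ccat (Q : QF) : TopCat := {|
  tc_car := cpf Q;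
  tc_open := gen_topology (fun S => exists a, partial_isometry Q a /\ S = Xset Q a);
  tc_open_top := gen_topology_is_topology _;
  tc_d := cpf_d Q;
  tc_r := cpf_r Q;
  tc_mul := cpf_mul Q
|}.

Definition opens (C : TopCat) : Type := { U : tc_car C -> Prop | tc_open C U }.

(* S as an open set when it is open (junk: the empty set otherwise; for an
   etale category the junk branch is never used) *)
Definition mkopen (C : TopCat) (S : tc_car C -> Prop) : opens C :=
  match excluded_middle_informative (tc_open C S) with
  | left H => exist _ S H
  | right _ => exist _ (fun _ => False) (tc_open_empty C)
  end.

Definition Omega (C : TopCat) : QF := {|
  q_car := opens C;
  q_le := fun U V => forall x, proj1_sig U x -> proj1_sig V x;
  q_mul := fun U V => mkopen C (fun z => exists u v, proj1_sig U u /\ proj1_sig V v /\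
                                     tc_d C u = tc_r C v /\ tc_mul C u v z);
  q_e := mkopen C (fun x => tc_d C x = x);
  q_star := fun U => mkopen C (fun y => exists x, proj1_sig U x /\ y = tc_d C x);
  q_plus := fun U => mkopen C (fun y => exists x, proj1_sig U x /\ y = tc_r C x)
|}.

Definition QF_iso (Q1 Q2 : QF) (f : q_car Q1 -> q_car Q2) : Prop :=
  (forall a b, f a = f b -> a = b) /\
  (forall y, exists x, f x = y) /\
  (forall a b, q_le Q1 a b <-> q_le Q2 (f a) (f b)) /\
  (forall a b, f (q_mul Q1 a b) = q_mul Q2 (f a) (f b)) /\
  f (q_e Q1) = q_e Q2 /\
  (forall a, f (q_star Q1 a) = q_star Q2 (f a)) /\
  (forall a, f (q_plus Q1 a) = q_plus Q2 (f a)).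

Definition cat_iso (C1 C2 : TopCat) (f : tc_car C1 -> tc_car C2) : Prop :=
  (forall x y, f x = f y -> x = y) /\
  (forall y, exists x, f x = y) /\
  (forall x, f (tc_d C1 x) = tc_d C2 (f x)) /\
  (forall x, f (tc_r C1 x) = tc_r C2 (f x)) /\
  (forall x y z, tc_mul C1 x y z <-> tc_mul C2 (f x) (f y) (f z)).

Definition homeo (C1 C2 : TopCat) (f : tc_car C1 -> tc_car C2) : Prop :=
  (forall x y, f x = f y -> x = y) /\
  (forall y, exists x, f x = y) /\
  (forall V, tc_open C2 V -> tc_open C1 (fun x => V (f x))) /\
  (forall U, tc_open C1 U -> tc_open C2 (fun y => exists x, U x /\ y = f x)).

Definition spatial (Q : QF) : Prop :=
  exists chi : q_car Q -> q_car (Omega (Ccat Q)),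
    (forall a, proj1_sig (chi a) = Xset Q a) /\
    QF_iso Q (Omega (Ccat Q)) chi.

Definition sober (C : TopCat) : Prop :=
  exists om : tc_car C -> tc_car (Ccat (Omega C)),
    (forall x, proj1_sig (om x) = (fun U : opens C => proj1_sig U x)) /\
    cat_iso C (Ccat (Omega C)) om /\
    homeo C (Ccat (Omega C)) om.

(* Main.v *)
Require Import Defs.
From Stdlib Require Import Classical ClassicalEpsilon FunctionalExtensionality PropExtensionality ProofIrrelevance.

Section Gen.
Variable Q : QF.
Local Notation le := (q_le Q).
Local Notation mul := (q_mul Q).
Local Notation e := (q_e Q).
Local Notation st := (q_star Q).
Local Notation pl := (q_plus Q).
Variable P : q_car Q -> Prop.

Hypothesis Hrefl : forall a, le a a.
Hypothesis Htrans : forall a b c, le a b -> le b c -> le a c.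
Hypothesis Hanti : forall a b, le a b -> le b a -> a = b.
Hypothesis Hlub : forall S, exists j, is_lub Q S j.
Hypothesis Hdistr : forall a S j m, is_lub Q S j -> is_meet Q a j m ->
      is_lub Q (fun x => exists s, S s /\ is_meet Q a s x) m.
Hypothesis Hassoc : forall a b c, mul (mul a b) c = mul a (mul b c).
Hypothesis Hunit : forall a, mul e a = a /\ mul a e = a.
Hypothesis Hmuld : forall a S j, is_lub Q S j ->
      is_lub Q (fun x => exists s, S s /\ x = mul a s) (mul a j) /\
      is_lub Q (fun x => exists s, S s /\ x = mul s a) (mul j a).
Hypothesis Hspl : forall S j, is_lub Q S j ->
      is_lub Q (fun x => exists s, S s /\ x = st s) (st j) /\
      is_lub Q (fun x => exists s, S s /\ x = pl s) (pl j).
Hypothesis Hle_e : forall a, le (st a) e /\ le (pl a) e.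
Hypothesis Hfix : forall p, le p e -> st p = p /\ pl p = p.
Hypothesis Hproj : forall p q, le p e -> le q e -> le (mul p q) e /\ mul p q = mul q p /\ mul p p = p.
Hypothesis Hres1 : forall a, mul a (st a) = a /\ mul (pl a) a = a.
Hypothesis Hres2 : forall a b, st (mul a b) = st (mul (st a) b) /\ pl (mul a b) = pl (mul a (pl b)).
Hypothesis HPpi : forall a, P a -> partial_isometry Q a.
Hypothesis HPdown : forall a b, P a -> le b a -> P b.
Hypothesis HPmul : forall a b, P a -> P b -> P (mul a b).
Hypothesis HPtop : forall t, (forall x, le x t) -> is_lub Q P t.

Definition isbot (z : q_car Q) := forall x, le z x.

Lemma lub2 a b : le a b -> is_lub Q (fun x => x = a \/ x = b) b.
Proof. intros H; split. - intros s [->| ->]; auto. - intros u Hu; apply Hu; auto. Qed.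

Lemma mul_monoL a b c : le a b -> le (mul c a) (mul c b).
Proof. intros H. destruct (Hmuld c _ _ (lub2 a b H)) as [[H1 _] _]. apply H1. eauto. Qed.
Lemma mul_monoR a b c : le a b -> le (mul a c) (mul b c).
Proof. intros H. destruct (Hmuld c _ _ (lub2 a b H)) as [_ [H1 _]]. apply H1. eauto. Qed.
Lemma st_mono a b : le a b -> le (st a) (st b).
Proof. intros H. destruct (Hspl _ _ (lub2 a b H)) as [[H1 _] _]. apply H1. eauto. Qed.
Lemma pl_mono a b : le a b -> le (pl a) (pl b).
Proof. intros H. destruct (Hspl _ _ (lub2 a b H)) as [_ [H1 _]]. apply H1. eauto. Qed.
Lemma mul_mono a b c d : le a b -> le c d -> le (mul a c) (mul b d).
Proof. intros; eapply Htrans; [apply mul_monoR; eauto| apply mul_monoL; eauto]. Qed.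

Lemma lub_empty z : is_lub Q (fun _ => False) z -> isbot z.
Proof. intros [_ H] x. apply H. intros _ []. Qed.
Lemma bot_ex : exists z, isbot z.
Proof. destruct (Hlub (fun _ => False)) as [z Hz]. exists z. apply lub_empty; auto. Qed.
Lemma lub_empty' z : isbot z -> is_lub Q (fun _ => False) z.
Proof. intros H; split; [intros _ []| intros; apply H]. Qed.
Lemma mul_bot_r a z : isbot z -> isbot (mul a z).
Proof. intros H. destruct (Hmuld a _ _ (lub_empty' z H)) as [[_ H1] _].
  intros x; apply H1. intros s [t [[] _]]. Qed.
Lemma mul_bot_l a z : isbot z -> isbot (mul z a).
Proof. intros H. destruct (Hmuld a _ _ (lub_empty' z H)) as [_ [_ H1]].
  intros x; apply H1. intros s [t [[] _]]. Qed.
Lemma st_bot z : isbot z -> isbot (st z).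
Proof. intros H. destruct (Hspl _ _ (lub_empty' z H)) as [[_ H1] _].
  intros x; apply H1. intros s [t [[] _]]. Qed.
Lemma pl_bot z : isbot z -> isbot (pl z).
Proof. intros H. destruct (Hspl _ _ (lub_empty' z H)) as [_ [_ H1]].
  intros x; apply H1. intros s [t [[] _]]. Qed.
Lemma bot_le z x : isbot z -> le x z -> isbot x.
Proof. intros H H1 y. eauto. Qed.

Lemma top_ex : exists t, forall x, le x t.
Proof. destruct (Hlub (fun _ => True)) as [t [H _]]. exists t; auto. Qed.

Lemma meet_ex a b : exists m, is_meet Q a b m.
Proof. destruct (Hlub (fun x => le x a /\ le x b)) as [m [H1 H2]].
  exists m. split; [|split].
  - apply H2. intros s [? ?]; auto.
  - apply H2. intros s [? ?]; auto.
  - intros u Hu1 Hu2. apply H1; auto. Qed.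

Lemma meet_le_self a j : le a j -> is_meet Q a j a.
Proof. intros H; split; [|split]; auto. Qed.

Lemma mul_le_r a p : le p e -> le (mul a p) a.
Proof. intros H. rewrite <- (proj2 (Hunit a)) at 2. apply mul_monoL; auto. Qed.
Lemma mul_le_l a p : le p e -> le (mul p a) a.
Proof. intros H. rewrite <- (proj1 (Hunit a)) at 2. apply mul_monoR; auto. Qed.

Lemma proj_le p q : le p e -> le q e -> le p q -> mul p q = p /\ mul q p = p.
Proof. intros Hp Hq H.
  assert (E : mul p q = p).
  { apply Hanti.
    - rewrite (proj1 (proj2 (Hproj p q Hp Hq))). apply mul_le_l; auto.
    - rewrite <- (proj2 (proj2 (Hproj p p Hp Hp))) at 1. apply mul_monoL; auto. }
  split; auto. rewrite <- (proj1 (proj2 (Hproj p q Hp Hq))); auto. Qed.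

Lemma proj_meet p q : le p e -> le q e -> is_meet Q p q (mul p q).
Proof. intros Hp Hq. split; [|split].
  - apply mul_le_r; auto.
  - rewrite (proj1 (proj2 (Hproj p q Hp Hq))). apply mul_le_r; auto.
  - intros u H1 H2. assert (Hu : le u e) by eauto.
    rewrite <- (proj2 (proj2 (Hproj u u Hu Hu))). apply mul_mono; auto. Qed.

Lemma st_proj_mul p q : le p e -> le q e -> st (mul p q) = mul p q.
Proof. intros Hp Hq. apply (Hfix _ (proj1 (Hproj p q Hp Hq))). Qed.
Lemma pl_proj_mul p q : le p e -> le q e -> pl (mul p q) = mul p q.
Proof. intros Hp Hq. apply (Hfix _ (proj1 (Hproj p q Hp Hq))). Qed.

Lemma pi_le a b : P a -> le b a -> b = mul (pl b) a /\ b = mul a (st b).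
Proof. intros Ha H. apply (HPpi a Ha b H). Qed.

Lemma is_meet_le1 a b m : is_meet Q a b m -> le m a.
Proof. intros [? _]; auto. Qed.
Lemma is_meet_le2 a b m : is_meet Q a b m -> le m b.
Proof. intros [_ [? _]]; auto. Qed.

Section Filt.
Variable A : q_car Q -> Prop.
Hypothesis HA : is_cpfilter Q A.
Lemma f_up a b : A a -> le a b -> A b.
Proof. destruct HA as [_ [H _]]; eauto. Qed.
Lemma f_meet a b : A a -> A b -> exists m, A m /\ le m a /\ le m b.
Proof. intros Ha Hb. destruct (meet_ex a b) as [m Hm]. exists m.
  destruct HA as [_ [_ [H _]]]. split; [eauto|]. destruct Hm as [? [? _]]; auto. Qed.
Lemma f_nbot z : A z -> ~ isbot z.
Proof. destruct HA as [_ [_ [_ [H _]]]]. intros Hz Hb. apply (H z Hb Hz). Qed.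
Lemma f_cp S j : is_lub Q S j -> A j -> exists s, S s /\ A s.
Proof. destruct HA as [_ [_ [_ [_ H]]]]. eauto. Qed.
Lemma f_ne : exists a, A a.
Proof. destruct HA as [H _]; auto. Qed.
Lemma f_split a S j : A a -> le a j -> is_lub Q S j -> exists s x, S s /\ is_meet Q a s x /\ A x.
Proof. intros Ha Hle Hj. pose proof (Hdistr a S j a Hj (meet_le_self a j Hle)) as H.
  destruct (f_cp _ _ H Ha) as [x [[s [Hs Hm]] Hx]]. eauto. Qed.
Lemma f_P a : A a -> exists a1, P a1 /\ le a1 a /\ A a1.
Proof. intros Ha. destruct top_ex as [t Ht].
  destruct (f_split a P t Ha (Ht a) (HPtop t Ht)) as [s [x [Hs [Hm Hx]]]].
  exists x. split; [|split]; auto.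
  - eapply HPdown; eauto. eapply is_meet_le2; eauto.
  - eapply is_meet_le1; eauto. Qed.
End Filt.

Definition lubPset a := fun x => exists s, P s /\ is_meet Q a s x.
Lemma lubP a : is_lub Q (lubPset a) a.
Proof. destruct top_ex as [t Ht]. apply (Hdistr a P t a (HPtop t Ht) (meet_le_self a t (Ht a))). Qed.
Lemma lubPset_P a x : lubPset a x -> P x /\ le x a.
Proof. intros [s [Hs Hm]]. split; [eapply HPdown; eauto; eapply is_meet_le2; eauto| eapply is_meet_le1; eauto]. Qed.


Definition Dset (A : q_car Q -> Prop) := upclose Q (fun x => exists a, A a /\ x = st a).
Definition Rset (A : q_car Q -> Prop) := upclose Q (fun x => exists a, A a /\ x = pl a).
Definition Mset (A B : q_car Q -> Prop) :=
  upclose Q (fun x => exists a b, A a /\ B b /\ x = mul a b).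

Lemma filt_D A : is_cpfilter Q A -> is_cpfilter Q (Dset A).
Proof. intros HA. split; [|split; [|split; [|split]]].
  - destruct (f_ne A HA) as [a Ha]. exists (st a). exists (st a). split; eauto.
  - intros a b [y [Hy H1]] H2. exists y. split; eauto.
  - intros x y m [x0 [[a1 [Ha1 ->]] H1]] [y0 [[a2 [Ha2 ->]] H2]] Hm.
    destruct (f_meet A HA a1 a2 Ha1 Ha2) as [c [Hc [Hc1 Hc2]]].
    exists (st c). split; eauto. destruct Hm as [_ [_ Hm]]. apply Hm.
    + apply (Htrans _ (st a1)); [apply st_mono; auto| auto].
    + apply (Htrans _ (st a2)); [apply st_mono; auto| auto].
  - intros z Hz [y [[a [Ha ->]] H1]].
    apply (f_nbot A HA a Ha). rewrite <- (proj1 (Hres1 a)). apply mul_bot_r.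
    intros x. eauto.
  - intros S j Hj [y [[a [Ha ->]] H1]].
    pose proof (Hdistr (st a) S j (st a) Hj (meet_le_self _ _ H1)) as HX.
    destruct (Hmuld a _ _ HX) as [HX2 _]. rewrite (proj1 (Hres1 a)) in HX2.
    destruct (f_cp A HA _ _ HX2 Ha) as [y [[w [[s [Hs Hw]] ->]] Hy]].
    exists s. split; auto. exists (st (mul a w)). split; [eauto|].
    rewrite (proj1 (Hres2 a w)).
    assert (Hw1 : le w (st a)) by (eapply is_meet_le1; eauto).
    assert (Hwe : le w e) by (eapply Htrans; eauto; apply Hle_e).
    rewrite st_proj_mul; auto; [|apply Hle_e].
    rewrite (proj2 (proj_le w (st a) Hwe (proj1 (Hle_e a)) Hw1)).
    eapply is_meet_le2; eauto.
Qed.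

Lemma filt_R A : is_cpfilter Q A -> is_cpfilter Q (Rset A).
Proof. intros HA. split; [|split; [|split; [|split]]].
  - destruct (f_ne A HA) as [a Ha]. exists (pl a). exists (pl a). split; eauto.
  - intros a b [y [Hy H1]] H2. exists y. split; eauto.
  - intros x y m [x0 [[a1 [Ha1 ->]] H1]] [y0 [[a2 [Ha2 ->]] H2]] Hm.
    destruct (f_meet A HA a1 a2 Ha1 Ha2) as [c [Hc [Hc1 Hc2]]].
    exists (pl c). split; eauto. destruct Hm as [_ [_ Hm]]. apply Hm.
    + apply (Htrans _ (pl a1)); [apply pl_mono; auto| auto].
    + apply (Htrans _ (pl a2)); [apply pl_mono; auto| auto].
  - intros z Hz [y [[a [Ha ->]] H1]].
    apply (f_nbot A HA a Ha). rewrite <- (proj2 (Hres1 a)). apply mul_bot_l.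
    intros x. eauto.
  - intros S j Hj [y [[a [Ha ->]] H1]].
    pose proof (Hdistr (pl a) S j (pl a) Hj (meet_le_self _ _ H1)) as HX.
    destruct (Hmuld a _ _ HX) as [_ HX2]. rewrite (proj2 (Hres1 a)) in HX2.
    destruct (f_cp A HA _ _ HX2 Ha) as [y [[w [[s [Hs Hw]] ->]] Hy]].
    exists s. split; auto. exists (pl (mul w a)). split; [eauto|].
    rewrite (proj2 (Hres2 w a)).
    assert (Hw1 : le w (pl a)) by (eapply is_meet_le1; eauto).
    assert (Hwe : le w e) by (eapply Htrans; eauto; apply Hle_e).
    rewrite pl_proj_mul; auto; [|apply Hle_e].
    rewrite (proj1 (proj_le w (pl a) Hwe (proj2 (Hle_e a)) Hw1)).
    eapply is_meet_le2; eauto.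
Qed.

Lemma cpf_d_eq (A : cpf Q) : proj1_sig (cpf_d Q A) = Dset (proj1_sig A).
Proof. unfold cpf_d, mkcpf. destruct excluded_middle_informative as [H|H]; [reflexivity|].
  exfalso. apply H. apply (filt_D _ (proj2_sig A)). Qed.
Lemma cpf_r_eq (A : cpf Q) : proj1_sig (cpf_r Q A) = Rset (proj1_sig A).
Proof. unfold cpf_r, mkcpf. destruct excluded_middle_informative as [H|H]; [reflexivity|].
  exfalso. apply H. apply (filt_R _ (proj2_sig A)). Qed.

Lemma cpf_eq (A B : cpf Q) : proj1_sig A = proj1_sig B -> A = B.
Proof. destruct A as [A HA], B as [B HB]; simpl; intros ->. f_equal. apply proof_irrelevance. Qed.

Lemma pred_ext {X : Type} (f g : X -> Prop) : (forall x, f x <-> g x) -> f = g.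
Proof. intros H. apply functional_extensionality; intros x; apply propositional_extensionality; auto. Qed.

Lemma normalize A B : is_cpfilter Q A -> is_cpfilter Q B -> Dset A = Rset B ->
  forall a b, A a -> B b -> exists a' b', A a' /\ B b' /\ P a' /\ P b' /\ le a' a /\ le b' b /\
    st a' = pl b'.
Proof. intros HA HB HDR a b Ha Hb.
  destruct (f_P A HA a Ha) as [a1 [Pa1 [Ha1a Ha1]]].
  destruct (f_P B HB b Hb) as [b1 [Pb1 [Hb1b Hb1]]].
  set (p := mul (st a1) (pl b1)).
  assert (Hpe : le p e) by (apply Hproj; apply Hle_e).
  assert (Hp1 : le p (st a1)) by (apply (proj_meet _ _ (proj1 (Hle_e a1)) (proj2 (Hle_e b1)))).
  assert (Hp2 : le p (pl b1)) by (apply (proj_meet _ _ (proj1 (Hle_e a1)) (proj2 (Hle_e b1)))).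
  assert (HpD : Dset A p).
  { destruct (filt_D A HA) as [_ [_ [Hm _]]]. eapply Hm.
    - exists (st a1); split; eauto.
    - rewrite HDR. exists (pl b1); split; eauto.
    - apply proj_meet; apply Hle_e. }
  assert (HpR : Rset B p) by (rewrite <- HDR; auto).
  destruct HpD as [y [[c [Hc ->]] Hcp]].
  destruct HpR as [y [[d [Hd ->]] Hdp]].
  exists (mul a1 p), (mul p b1). split; [|split; [|split; [|split; [|split; [|split]]]]].
  - destruct (f_meet A HA a1 c Ha1 Hc) as [m [Hm [Hm1 Hm2]]].
    eapply f_up; eauto.
    assert (E : m = mul m p).
    { rewrite <- (proj1 (Hres1 m)) at 1.
      assert (Hsm : le (st m) p) by (apply (Htrans _ (st c)); [apply st_mono; auto| auto]).
      rewrite <- (proj1 (proj_le (st m) p (proj1 (Hle_e m)) Hpe Hsm)).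
      rewrite <- Hassoc. rewrite (proj1 (Hres1 m)). auto. }
    rewrite E. apply mul_monoR; auto.
  - destruct (f_meet B HB b1 d Hb1 Hd) as [m [Hm [Hm1 Hm2]]].
    eapply f_up; eauto.
    assert (E : m = mul p m).
    { rewrite <- (proj2 (Hres1 m)) at 1.
      assert (Hsm : le (pl m) p) by (apply (Htrans _ (pl d)); [apply pl_mono; auto| auto]).
      rewrite <- (proj2 (proj_le (pl m) p (proj2 (Hle_e m)) Hpe Hsm)).
      rewrite Hassoc. rewrite (proj2 (Hres1 m)). auto. }
    rewrite E. apply mul_monoL; auto.
  - apply (HPdown a1); auto. apply mul_le_r; auto.
  - apply (HPdown b1); auto. apply mul_le_l; auto.
  - apply (Htrans _ a1); auto. apply mul_le_r; auto.
  - apply (Htrans _ b1); auto. apply mul_le_l; auto.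
  - rewrite (proj1 (Hres2 a1 p)), (proj2 (Hres2 p b1)).
    rewrite st_proj_mul, pl_proj_mul; try apply Hle_e; auto.
    rewrite (proj2 (proj_le p (st a1) Hpe (proj1 (Hle_e a1)) Hp1)).
    rewrite (proj1 (proj_le p (pl b1) Hpe (proj2 (Hle_e b1)) Hp2)). auto.
Qed.


Lemma st_norm a b : st a = pl b -> st (mul a b) = st b.
Proof. intros H. rewrite (proj1 (Hres2 a b)), H, (proj2 (Hres1 b)). auto. Qed.

Lemma filt_M A B : is_cpfilter Q A -> is_cpfilter Q B -> Dset A = Rset B -> is_cpfilter Q (Mset A B).
Proof. intros HA HB HDR. split; [|split; [|split; [|split]]].
  - destruct (f_ne A HA) as [a Ha]. destruct (f_ne B HB) as [b Hb].
    exists (mul a b). exists (mul a b). split; eauto 6.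
  - intros a b [y [Hy H1]] H2. exists y. split; eauto.
  - intros x y m [x0 [[a1 [b1 [Ha1 [Hb1 ->]]]] H1]] [y0 [[a2 [b2 [Ha2 [Hb2 ->]]]] H2]] Hm.
    destruct (f_meet A HA a1 a2 Ha1 Ha2) as [c [Hc [Hc1 Hc2]]].
    destruct (f_meet B HB b1 b2 Hb1 Hb2) as [d [Hd [Hd1 Hd2]]].
    exists (mul c d). split; [eauto 6|]. destruct Hm as [_ [_ Hm]]. apply Hm.
    + apply (Htrans _ (mul a1 b1)); [apply mul_mono; auto| auto].
    + apply (Htrans _ (mul a2 b2)); [apply mul_mono; auto| auto].
  - intros z Hz [y [[a [b [Ha [Hb ->]]]] H1]].
    destruct (normalize A B HA HB HDR a b Ha Hb) as [a' [b' [Ha' [Hb' [Pa' [Pb' [Ha'a [Hb'b E]]]]]]]].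
    apply (f_nbot B HB b' Hb'). rewrite <- (proj1 (Hres1 b')). apply mul_bot_r.
    rewrite <- (st_norm a' b' E). apply (bot_le (st z)); [apply st_bot; auto|].
    apply st_mono. apply (Htrans _ (mul a b)); [apply mul_mono; auto|auto].
  - intros S j Hj [y [[a [b [Ha [Hb ->]]]] H1]].
    destruct (normalize A B HA HB HDR a b Ha Hb) as [a' [b' [Ha' [Hb' [Pa' [Pb' [Ha'a [Hb'b E]]]]]]]].
    set (c := mul a' b').
    assert (Pc : P c) by (apply HPmul; auto).
    assert (Hcj : le c j) by (apply (Htrans _ (mul a b)); [apply mul_mono; auto|auto]).
    pose proof (Hdistr c S j c Hj (meet_le_self _ _ Hcj)) as HX.
    destruct (Hspl _ _ HX) as [HX2 _].
    destruct (Hmuld b' _ _ HX2) as [HX3 _].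
    unfold c in HX3. rewrite (st_norm a' b' E), (proj1 (Hres1 b')) in HX3.
    destruct (f_cp B HB _ _ HX3 Hb') as [w [[y [[x [[s [Hs Hsx]] ->]] ->]] Hw]].
    exists s. split; auto. exists (mul a' (mul b' (st x))). split.
    + exists a', (mul b' (st x)). auto.
    + rewrite <- Hassoc. fold c.
      rewrite <- (proj2 (pi_le c x Pc (is_meet_le1 _ _ _ Hsx))).
      eapply is_meet_le2; eauto.
Qed.


Lemma Z_P2 Z a b : is_cpfilter Q Z -> Z (mul a b) ->
  exists a1 b1, P a1 /\ P b1 /\ le a1 a /\ le b1 b /\ Z (mul a1 b1).
Proof. intros HZ Hab.
  destruct (Hmuld b _ _ (lubP a)) as [_ H1].
  destruct (f_cp Z HZ _ _ H1 Hab) as [w [[x [Hx ->]] Hxb]].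
  destruct (Hmuld x _ _ (lubP b)) as [H2 _].
  destruct (f_cp Z HZ _ _ H2 Hxb) as [w [[y [Hy ->]] Hxy]].
  apply lubPset_P in Hx; apply lubPset_P in Hy.
  exists x, y. intuition.
Qed.

Lemma decomp Z a b : is_cpfilter Q Z -> Z (mul a b) ->
  exists A B, is_cpfilter Q A /\ is_cpfilter Q B /\ A a /\ B b /\ Dset A = Rset B /\ Z = Mset A B.
Proof. intros HZ Hab.
  destruct (Z_P2 Z a b HZ Hab) as [a1 [b1 [Pa1 [Pb1 [Ha1 [Hb1 HZ1]]]]]].
  set (b2 := mul (st a1) b1).
  assert (Hb2b1 : le b2 b1) by (apply mul_le_l; apply Hle_e).
  assert (Pb2 : P b2) by (apply (HPdown b1); auto).
  assert (E1 : mul a1 b2 = mul a1 b1) by (unfold b2; rewrite <- Hassoc, (proj1 (Hres1 a1)); auto).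
  assert (Hpb2 : le (pl b2) (st a1)).
  { unfold b2. rewrite (proj2 (Hres2 (st a1) b1)). rewrite pl_proj_mul; try apply Hle_e.
    apply mul_le_r. apply Hle_e. }
  set (c := mul a1 b2).
  assert (HZc : Z c) by (unfold c; rewrite E1; auto).
  assert (Pc : P c) by (apply HPmul; auto).
  pose (fx := fun z => mul (pl z) a1).
  pose (fy := fun z => mul b2 (st z)).
  assert (K1 : forall z, le z c -> mul (fx z) (fy z) = z).
  { intros z Hz. unfold fx, fy. rewrite Hassoc, <- (Hassoc a1 b2).
    fold c. rewrite <- (proj2 (pi_le c z Pc Hz)). apply Hres1. }
  assert (K2 : forall z, le z c -> st (fx z) = pl (fy z)).
  { intros z Hz.
    assert (Ez : z = mul a1 (fy z)).
    { unfold fy. rewrite <- Hassoc. fold c. apply (pi_le c z Pc Hz). }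
    assert (Hy : le (pl (fy z)) (st a1)).
    { apply (Htrans _ (pl b2)); auto. apply pl_mono. apply mul_le_r. apply Hle_e. }
    assert (Ex : fx z = mul a1 (pl (fy z))).
    { unfold fx at 1. rewrite Ez at 1. rewrite (proj2 (Hres2 a1 (fy z))).
      symmetry. apply (pi_le a1); auto. apply mul_le_r. apply Hle_e. }
    rewrite Ex, (proj1 (Hres2 a1 (pl (fy z)))), st_proj_mul; try apply Hle_e.
    apply (proj_le (pl (fy z)) (st a1)); try apply Hle_e; auto. }
  assert (K3 : forall z, le (fx z) a1) by (intros z; apply mul_le_l; apply Hle_e).
  assert (K4 : forall z, le (fy z) b2) by (intros z; apply mul_le_r; apply Hle_e).
  assert (Mx : forall z z', le z z' -> le (fx z) (fx z')) by (intros; apply mul_monoR; apply pl_mono; auto).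
  assert (My : forall z z', le z z' -> le (fy z) (fy z')) by (intros; apply mul_monoL; apply st_mono; auto).
  set (A := upclose Q (fun x => exists z, Z z /\ le z c /\ x = fx z)).
  set (B := upclose Q (fun y => exists z, Z z /\ le z c /\ y = fy z)).
  assert (Zmeet : forall z1 z2, Z z1 -> Z z2 -> le z1 c -> exists z, Z z /\ le z c /\ le z z1 /\ le z z2).
  { intros z1 z2 H1 H2 H3. destruct (f_meet Z HZ z1 z2 H1 H2) as [z [Hz [Hz1 Hz2]]].
    exists z. split; [|split]; eauto. }
  exists A, B. split; [|split; [|split; [|split; [|split]]]].
  - split; [|split; [|split; [|split]]].
    + exists (fx c). exists (fx c). split; [exists c; auto|auto].
    + intros u v [y [Hy H1]] H2. exists y. split; eauto.
    + intros u v m [u0 [[z1 [Hz1 [Hz1c ->]]] H1]] [v0 [[z2 [Hz2 [Hz2c ->]]] H2]] Hm.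
      destruct (Zmeet z1 z2 Hz1 Hz2 Hz1c) as [z [Hz [Hzc [Hzz1 Hzz2]]]].
      exists (fx z). split; [exists z; auto|]. destruct Hm as [_ [_ Hm]]. apply Hm; eauto.
    + intros w Hw [x0 [[z [Hz [Hzc ->]]] H1]].
      apply (f_nbot Z HZ z Hz). rewrite <- (K1 z Hzc). apply mul_bot_l. intros x; eauto.
    + intros S j Hj [x0 [[z [Hz [Hzc ->]]] H1]].
      pose proof (Hdistr (fx z) S j (fx z) Hj (meet_le_self _ _ H1)) as HX.
      destruct (Hmuld (fy z) _ _ HX) as [_ HX2]. rewrite (K1 z Hzc) in HX2.
      destruct (f_cp Z HZ _ _ HX2 Hz) as [z' [[w [[s [Hs Hsw]] ->]] Hz']].
      exists s. split; auto.
      assert (Hwx : le w (fx z)) by (eapply is_meet_le1; eauto).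
      assert (Hz'z : le (mul w (fy z)) z).
      { rewrite <- (K1 z Hzc) at 2. apply mul_monoR; auto. }
      exists (fx (mul w (fy z))). split; [exists (mul w (fy z)); split; [|split]; eauto|].
      apply (Htrans _ w); [|eapply is_meet_le2; eauto].
      assert (Ew : mul (pl w) a1 = w) by (symmetry; apply (pi_le a1 w Pa1 (Htrans _ _ _ Hwx (K3 z)))).
      apply (Htrans _ (mul (pl w) a1)); [|rewrite Ew; apply Hrefl].
      unfold fx. apply mul_monoR. rewrite (proj2 (Hres2 w (fy z))). apply pl_mono.
      apply mul_le_r. apply Hle_e.
  - split; [|split; [|split; [|split]]].
    + exists (fy c). exists (fy c). split; [exists c; auto|auto].
    + intros u v [y [Hy H1]] H2. exists y. split; eauto.
    + intros u v m [u0 [[z1 [Hz1 [Hz1c ->]]] H1]] [v0 [[z2 [Hz2 [Hz2c ->]]] H2]] Hm.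
      destruct (Zmeet z1 z2 Hz1 Hz2 Hz1c) as [z [Hz [Hzc [Hzz1 Hzz2]]]].
      exists (fy z). split; [exists z; auto|]. destruct Hm as [_ [_ Hm]]. apply Hm; eauto.
    + intros w Hw [x0 [[z [Hz [Hzc ->]]] H1]].
      apply (f_nbot Z HZ z Hz). rewrite <- (K1 z Hzc). apply mul_bot_r. intros x; eauto.
    + intros S j Hj [x0 [[z [Hz [Hzc ->]]] H1]].
      pose proof (Hdistr (fy z) S j (fy z) Hj (meet_le_self _ _ H1)) as HX.
      destruct (Hmuld (fx z) _ _ HX) as [HX2 _]. rewrite (K1 z Hzc) in HX2.
      destruct (f_cp Z HZ _ _ HX2 Hz) as [z' [[w [[s [Hs Hsw]] ->]] Hz']].
      exists s. split; auto.
      assert (Hwy : le w (fy z)) by (eapply is_meet_le1; eauto).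
      assert (Hz'z : le (mul (fx z) w) z).
      { rewrite <- (K1 z Hzc) at 2. apply mul_monoL; auto. }
      exists (fy (mul (fx z) w)). split; [exists (mul (fx z) w); split; [|split]; eauto|].
      apply (Htrans _ w); [|eapply is_meet_le2; eauto].
      assert (Ew : mul b2 (st w) = w) by (symmetry; apply (pi_le b2 w Pb2 (Htrans _ _ _ Hwy (K4 z)))).
      apply (Htrans _ (mul b2 (st w))); [|rewrite Ew; apply Hrefl].
      unfold fy. apply mul_monoL. rewrite (proj1 (Hres2 (fx z) w)). apply st_mono.
      apply mul_le_l. apply Hle_e.
  - exists (fx c). split; [exists c; auto|]. apply (Htrans _ a1); auto.
  - exists (fy c). split; [exists c; auto|]. apply (Htrans _ b2); auto. apply (Htrans _ b1); auto.
  - apply pred_ext. intros q. split.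
    + intros [y [[u [[x0 [[z [Hz [Hzc ->]]] Hu]] ->]] Hq]].
      exists (pl (fy z)). split.
      * exists (fy z). split; auto. exists (fy z). split; [exists z; auto| auto].
      * rewrite <- (K2 z Hzc). apply (Htrans _ (st u)); auto. apply st_mono; auto.
    + intros [y [[u [[x0 [[z [Hz [Hzc ->]]] Hu]] ->]] Hq]].
      exists (st (fx z)). split.
      * exists (fx z). split; auto. exists (fx z). split; [exists z; auto| auto].
      * rewrite (K2 z Hzc). apply (Htrans _ (pl u)); auto. apply pl_mono; auto.
  - apply pred_ext. intros q. split.
    + intros Hq. destruct (f_meet Z HZ q c Hq HZc) as [z [Hz [Hzq Hzc]]].
      exists z. split; auto. exists (fx z), (fy z). split; [|split].
      * exists (fx z). split; [exists z; auto|auto].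
      * exists (fy z). split; [exists z; auto|auto].
      * symmetry; apply K1; auto.
    + intros [y [[u [v [[x0 [[z1 [Hz1 [Hz1c ->]]] Hu]] [[y0 [[z2 [Hz2 [Hz2c ->]]] Hv]] ->]]]] Hq]].
      destruct (Zmeet z1 z2 Hz1 Hz2 Hz1c) as [z [Hz [Hzc [Hzz1 Hzz2]]]].
      apply (f_up Z HZ z); auto. rewrite <- (K1 z Hzc).
      apply (Htrans _ (mul u v)); auto. apply mul_mono; eauto.
Qed.


Lemma Xset_le a b (A : cpf Q) : le a b -> Xset Q a A -> Xset Q b A.
Proof. intros H Ha. unfold Xset in *. eapply f_up; eauto. apply (proj2_sig A). Qed.

Lemma Xset_meet a b m (A : cpf Q) : is_meet Q a b m -> (Xset Q m A <-> Xset Q a A /\ Xset Q b A).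
Proof. intros Hm. unfold Xset. destruct A as [A HA]; simpl. split.
  - intros H. split; eapply f_up; eauto; eapply Hm.
  - intros [Ha Hb]. destruct HA as [_ [_ [H _]]]. eauto. Qed.

Lemma Xset_lub S j (A : cpf Q) : is_lub Q S j -> (Xset Q j A <-> exists s, S s /\ Xset Q s A).
Proof. intros Hj. unfold Xset. destruct A as [A HA]; simpl. split.
  - intros H. eapply f_cp; eauto.
  - intros [s [Hs H]]. eapply f_up; eauto. apply Hj; auto. Qed.

Lemma Xset_top t (A : cpf Q) : (forall x, le x t) -> Xset Q t A.
Proof. intros Ht. unfold Xset. destruct A as [A HA]; simpl.
  destruct (f_ne A HA) as [a Ha]. eapply f_up; eauto. Qed.

Lemma gen_basic {X : Type} (B : (X -> Prop) -> Prop) S : B S -> gen_topology B S.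
Proof. intros H O _ HB. auto. Qed.

Lemma X_open a : tc_open (Ccat Q) (Xset Q a).
Proof. simpl.
  assert (E : Xset Q a = (fun A => exists U, (fun U => exists x, lubPset a x /\ U = Xset Q x) U /\ U A)).
  { apply pred_ext. intros A. rewrite (Xset_lub _ _ A (lubP a)). split.
    - intros [s [Hs H]]. exists (Xset Q s). eauto.
    - intros [U [[x [Hx ->]] H]]. eauto. }
  rewrite E. apply (proj1 (gen_topology_is_topology _)).
  intros U [x [Hx ->]]. apply gen_basic. exists x. split; auto.
  apply HPpi. apply (lubPset_P a x Hx). Qed.

Lemma open_X S : tc_open (Ccat Q) S -> exists a, S = Xset Q a.
Proof. simpl. intros H. apply H.
  - split; [|split].
    + intros F HF. destruct (Hlub (fun a => F (Xset Q a))) as [j Hj]. exists j.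
      apply pred_ext. intros A. rewrite (Xset_lub _ _ A Hj). split.
      * intros [U [HU HA]]. destruct (HF U HU) as [a ->]. eauto.
      * intros [s [Hs HA]]. eauto.
    + intros U V [a ->] [b ->]. destruct (meet_ex a b) as [m Hm]. exists m.
      apply pred_ext. intros A. rewrite (Xset_meet a b m A Hm). tauto.
    + destruct top_ex as [t Ht]. exists t. apply pred_ext. intros A. split; auto.
      intros _. apply Xset_top; auto.
  - intros U [a [_ ->]]. eauto. Qed.

Lemma G_mul a b (Z : cpf Q) :
  (exists A B : cpf Q, Xset Q a A /\ Xset Q b B /\ cpf_d Q A = cpf_r Q B /\ cpf_mul Q A B Z)
  <-> Xset Q (mul a b) Z.
Proof. split.
  - intros [A [B [Ha [Hb [_ [_ HZ]]]]]]. unfold Xset. rewrite HZ.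
    exists (mul a b). split; [exists a, b; auto| apply Hrefl].
  - intros HZ. destruct (decomp (proj1_sig Z) a b (proj2_sig Z) HZ)
      as [A [B [HA [HB [Ha [Hb [HDR EZ]]]]]]].
    assert (E : cpf_d Q (exist _ A HA) = cpf_r Q (exist _ B HB)).
    { apply cpf_eq. rewrite cpf_d_eq, cpf_r_eq. simpl. auto. }
    exists (exist _ A HA), (exist _ B HB). split; [|split; [|split; [|split]]]; auto.
Qed.

Lemma G_st a (y : cpf Q) : (exists x, Xset Q a x /\ y = cpf_d Q x) <-> Xset Q (st a) y.
Proof. split.
  - intros [x [Hx ->]]. unfold Xset. rewrite cpf_d_eq. exists (st a). split; eauto.
  - intros Hy. destruct y as [Y HY]. unfold Xset in Hy; simpl in Hy.
    destruct (Hspl _ _ (lubP a)) as [HL _].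
    destruct (f_cp Y HY _ _ HL Hy) as [w [[a1 [Ha1 ->]] Hya1]].
    destruct (lubPset_P a a1 Ha1) as [Pa1 Ha1a].
    assert (Hs : forall p, le p (st a1) -> st (mul a1 p) = p).
    { intros p Hp. assert (Hpe : le p e) by (eapply Htrans; eauto; apply Hle_e).
      rewrite (proj1 (Hres2 a1 p)), st_proj_mul; try apply Hle_e; auto.
      apply (proj_le p (st a1)); auto; apply Hle_e. }
    set (A := upclose Q (fun u => exists p, Y p /\ le p (st a1) /\ u = mul a1 p)).
    assert (HA : is_cpfilter Q A).
    { split; [|split; [|split; [|split]]].
      - exists (mul a1 (st a1)). exists (mul a1 (st a1)). split; [exists (st a1); auto|apply Hrefl].
      - intros u v [w [Hw H1]] H2. exists w. split; eauto.
      - intros u v m [u0 [[p1 [Hp1 [Hp1a ->]]] H1]] [v0 [[p2 [Hp2 [Hp2a ->]]] H2]] Hm.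
        destruct (f_meet Y HY p1 p2 Hp1 Hp2) as [p [Hp [Hpp1 Hpp2]]].
        exists (mul a1 p). split; [exists p; split; [|split]; eauto|].
        destruct Hm as [_ [_ Hm]]. apply Hm.
        + apply (Htrans _ (mul a1 p1)); auto. apply mul_monoL; auto.
        + apply (Htrans _ (mul a1 p2)); auto. apply mul_monoL; auto.
      - intros z Hz [u0 [[p [Hp [Hpa ->]]] H1]].
        apply (f_nbot Y HY p Hp). rewrite <- (Hs p Hpa).
        apply (bot_le (st z)); [apply st_bot; auto| apply st_mono; auto].
      - intros S j Hj [u0 [[p [Hp [Hpa ->]]] H1]].
        pose proof (Hdistr _ S j _ Hj (meet_le_self _ _ H1)) as HX.
        destruct (Hspl _ _ HX) as [HX2 _]. rewrite (Hs p Hpa) in HX2.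
        destruct (f_cp Y HY _ _ HX2 Hp) as [q [[w [[s [Hs' Hsw]] ->]] Hw]].
        exists s. split; auto.
        assert (Hw1 : le w (mul a1 p)) by (eapply is_meet_le1; eauto).
        assert (Hw2 : le w a1) by (eapply Htrans; eauto; apply mul_le_r; eapply Htrans; eauto; apply Hle_e).
        exists (mul a1 (st w)). split.
        + exists (st w). split; [auto|split; auto].
          apply (Htrans _ p); auto. rewrite <- (Hs p Hpa). apply st_mono; auto.
        + rewrite <- (proj2 (pi_le a1 w Pa1 Hw2)). eapply is_meet_le2; eauto. }
    exists (exist _ A HA). split.
    + unfold Xset; simpl. exists (mul a1 (st a1)). split; [exists (st a1); auto|].
      rewrite (proj1 (Hres1 a1)). auto.
    + apply cpf_eq. rewrite cpf_d_eq. simpl. apply pred_ext. intros q. split.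
      * intros Hq. destruct (f_meet Y HY q (st a1) Hq Hya1) as [p [Hp [Hpq Hpa]]].
        exists p. split; auto. exists (mul a1 p). split; [|symmetry; apply Hs; auto].
        exists (mul a1 p). split; [exists p; auto|apply Hrefl].
      * intros [w [[u [[u0 [[p [Hp [Hpa ->]]] Hu]] ->]] Hq]].
        eapply f_up; eauto. apply (Htrans _ (st u)); auto. rewrite <- (Hs p Hpa).
        apply st_mono; auto.
Qed.

Lemma G_pl a (y : cpf Q) : (exists x, Xset Q a x /\ y = cpf_r Q x) <-> Xset Q (pl a) y.
Proof. split.
  - intros [x [Hx ->]]. unfold Xset. rewrite cpf_r_eq. exists (pl a). split; eauto.
  - intros Hy. destruct y as [Y HY]. unfold Xset in Hy; simpl in Hy.
    destruct (Hspl _ _ (lubP a)) as [_ HL].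
    destruct (f_cp Y HY _ _ HL Hy) as [w [[a1 [Ha1 ->]] Hya1]].
    destruct (lubPset_P a a1 Ha1) as [Pa1 Ha1a].
    assert (Hs : forall p, le p (pl a1) -> pl (mul p a1) = p).
    { intros p Hp. assert (Hpe : le p e) by (eapply Htrans; eauto; apply Hle_e).
      rewrite (proj2 (Hres2 p a1)), pl_proj_mul; try apply Hle_e; auto.
      apply (proj_le p (pl a1)); auto; apply Hle_e. }
    set (A := upclose Q (fun u => exists p, Y p /\ le p (pl a1) /\ u = mul p a1)).
    assert (HA : is_cpfilter Q A).
    { split; [|split; [|split; [|split]]].
      - exists (mul (pl a1) a1). exists (mul (pl a1) a1). split; [exists (pl a1); auto|apply Hrefl].
      - intros u v [w [Hw H1]] H2. exists w. split; eauto.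
      - intros u v m [u0 [[p1 [Hp1 [Hp1a ->]]] H1]] [v0 [[p2 [Hp2 [Hp2a ->]]] H2]] Hm.
        destruct (f_meet Y HY p1 p2 Hp1 Hp2) as [p [Hp [Hpp1 Hpp2]]].
        exists (mul p a1). split; [exists p; split; [|split]; eauto|].
        destruct Hm as [_ [_ Hm]]. apply Hm.
        + apply (Htrans _ (mul p1 a1)); auto. apply mul_monoR; auto.
        + apply (Htrans _ (mul p2 a1)); auto. apply mul_monoR; auto.
      - intros z Hz [u0 [[p [Hp [Hpa ->]]] H1]].
        apply (f_nbot Y HY p Hp). rewrite <- (Hs p Hpa).
        apply (bot_le (pl z)); [apply pl_bot; auto| apply pl_mono; auto].
      - intros S j Hj [u0 [[p [Hp [Hpa ->]]] H1]].
        pose proof (Hdistr _ S j _ Hj (meet_le_self _ _ H1)) as HX.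
        destruct (Hspl _ _ HX) as [_ HX2]. rewrite (Hs p Hpa) in HX2.
        destruct (f_cp Y HY _ _ HX2 Hp) as [q [[w [[s [Hs' Hsw]] ->]] Hw]].
        exists s. split; auto.
        assert (Hw1 : le w (mul p a1)) by (eapply is_meet_le1; eauto).
        assert (Hw2 : le w a1) by (eapply Htrans; eauto; apply mul_le_l; eapply Htrans; eauto; apply Hle_e).
        exists (mul (pl w) a1). split.
        + exists (pl w). split; [auto|split; auto].
          apply (Htrans _ p); auto. rewrite <- (Hs p Hpa). apply pl_mono; auto.
        + rewrite <- (proj1 (pi_le a1 w Pa1 Hw2)). eapply is_meet_le2; eauto. }
    exists (exist _ A HA). split.
    + unfold Xset; simpl. exists (mul (pl a1) a1). split; [exists (pl a1); auto|].
      rewrite (proj2 (Hres1 a1)). auto.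
    + apply cpf_eq. rewrite cpf_r_eq. simpl. apply pred_ext. intros q. split.
      * intros Hq. destruct (f_meet Y HY q (pl a1) Hq Hya1) as [p [Hp [Hpq Hpa]]].
        exists p. split; auto. exists (mul p a1). split; [|symmetry; apply Hs; auto].
        exists (mul p a1). split; [exists p; auto|apply Hrefl].
      * intros [w [[u [[u0 [[p [Hp [Hpa ->]]] Hu]] ->]] Hq]].
        eapply f_up; eauto. apply (Htrans _ (pl u)); auto. rewrite <- (Hs p Hpa).
        apply pl_mono; auto.
Qed.

Lemma G_e (A : cpf Q) : cpf_d Q A = A <-> Xset Q e A.
Proof. destruct A as [A HA]. unfold Xset; simpl. split.
  - intros H. apply (f_equal (@proj1_sig _ _)) in H. rewrite cpf_d_eq in H. simpl in H.
    rewrite <- H. destruct (f_ne A HA) as [a Ha]. exists (st a). split; [eauto|apply Hle_e].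
  - intros He. apply cpf_eq. rewrite cpf_d_eq. simpl. apply pred_ext. intros q. split.
    + intros [w [[a [Ha ->]] Hq]]. destruct (f_meet A HA a e Ha He) as [m [Hm [Hma Hme]]].
      eapply f_up; eauto. apply (Htrans _ (st a)); auto.
      rewrite <- (proj1 (Hfix m Hme)). apply st_mono; auto.
    + intros Hq. destruct (f_meet A HA q e Hq He) as [m [Hm [Hmq Hme]]].
      exists m. split; auto. exists m. split; auto. symmetry. apply (Hfix m Hme).
Qed.

End Gen.

Definition RQFP (Q : QF) (P : q_car Q -> Prop) : Prop :=
  (forall a, q_le Q a a) /\
  (forall a b c, q_le Q a b -> q_le Q b c -> q_le Q a c) /\
  (forall a b, q_le Q a b -> q_le Q b a -> a = b) /\
  (forall S, exists j, is_lub Q S j) /\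
  (forall a S j m, is_lub Q S j -> is_meet Q a j m ->
      is_lub Q (fun x => exists s, S s /\ is_meet Q a s x) m) /\
  (forall a b c, q_mul Q (q_mul Q a b) c = q_mul Q a (q_mul Q b c)) /\
  (forall a, q_mul Q (q_e Q) a = a /\ q_mul Q a (q_e Q) = a) /\
  (forall a S j, is_lub Q S j ->
      is_lub Q (fun x => exists s, S s /\ x = q_mul Q a s) (q_mul Q a j) /\
      is_lub Q (fun x => exists s, S s /\ x = q_mul Q s a) (q_mul Q j a)) /\
  (forall S j, is_lub Q S j ->
      is_lub Q (fun x => exists s, S s /\ x = q_star Q s) (q_star Q j) /\
      is_lub Q (fun x => exists s, S s /\ x = q_plus Q s) (q_plus Q j)) /\
  (forall a, q_le Q (q_star Q a) (q_e Q) /\ q_le Q (q_plus Q a) (q_e Q)) /\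
  (forall p, q_le Q p (q_e Q) -> q_star Q p = p /\ q_plus Q p = p) /\
  (forall p q, q_le Q p (q_e Q) -> q_le Q q (q_e Q) ->
     q_le Q (q_mul Q p q) (q_e Q) /\ q_mul Q p q = q_mul Q q p /\ q_mul Q p p = p) /\
  (forall a, q_mul Q a (q_star Q a) = a /\ q_mul Q (q_plus Q a) a = a) /\
  (forall a b, q_star Q (q_mul Q a b) = q_star Q (q_mul Q (q_star Q a) b) /\
               q_plus Q (q_mul Q a b) = q_plus Q (q_mul Q a (q_plus Q b))) /\
  (forall a, P a -> partial_isometry Q a) /\
  (forall a b, P a -> q_le Q b a -> P b) /\
  (forall a b, P a -> P b -> P (q_mul Q a b)) /\
  (forall t, (forall x, q_le Q x t) -> is_lub Q P t).

Ltac dRQ H := destruct H as [?H1 [?H2 [?H3 [?H4 [?H5 [?H6 [?H7 [?H8 [?H9 [?H10 [?H11 [?H12 [?H13 [?H14 [?H15 [?H16 [?H17 ?H18]]]]]]]]]]]]]]]]].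

Lemma RQF_RQFP Q : is_RQF Q -> RQFP Q (partial_isometry Q).
Proof. intros H.
  destruct H as [H1 [H2 [H3 [H4 [H5 [H6 [H7 [H8 [H9 [H10 [H11 [H12 [H13 [H14 [H15 H16]]]]]]]]]]]]]]].
  unfold RQFP. do 14 (split; [assumption|]). split; [intros a Ha; exact Ha|].
  split; [|split; assumption].
  intros a b Pa Hba d Hdb.
  assert (Hda : q_le Q d a) by eauto.
  destruct (Pa d Hda) as [E1 E2]. destruct (Pa b Hba) as [F1 F2].
  split.
  - rewrite F1, <- H6.
    rewrite (proj1 (proj_le Q H1 H3 H7 H8 H12 (q_plus Q d) (q_plus Q b)
      (proj2 (H10 d)) (proj2 (H10 b)) (pl_mono Q H1 H3 H9 d b Hdb))). auto.
  - rewrite F2, H6.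
    rewrite (proj2 (proj_le Q H1 H3 H7 H8 H12 (q_star Q d) (q_star Q b)
      (proj1 (H10 d)) (proj1 (H10 b)) (st_mono Q H1 H3 H9 d b Hdb))). auto.
Qed.

Section OmegaGen.
Variable C : TopCat.

Lemma mkopen_eq S : tc_open C S -> proj1_sig (mkopen C S) = S.
Proof. intros H. unfold mkopen. destruct excluded_middle_informative; [reflexivity|contradiction]. Qed.

Lemma opens_eq (U V : opens C) : proj1_sig U = proj1_sig V -> U = V.
Proof. destruct U as [U HU], V as [V HV]; simpl; intros ->. f_equal. apply proof_irrelevance. Qed.

Lemma open_union (F : (tc_car C -> Prop) -> Prop) : (forall U, F U -> tc_open C U) ->
  tc_open C (fun x => exists U, F U /\ U x).
Proof. apply (proj1 (tc_open_top C)). Qed.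
Lemma open_inter U V : tc_open C U -> tc_open C V -> tc_open C (fun x => U x /\ V x).
Proof. apply (proj1 (proj2 (tc_open_top C))). Qed.
Lemma open_full : tc_open C (fun _ => True).
Proof. apply (proj2 (proj2 (tc_open_top C))). Qed.

Lemma open_ext S T : (forall x, S x <-> T x) -> tc_open C S -> tc_open C T.
Proof. intros H HS. replace T with S; auto. apply pred_ext; auto. Qed.

Definition oU (S : opens C -> Prop) : tc_car C -> Prop := fun x => exists V, S V /\ proj1_sig V x.
Lemma oU_open S : tc_open C (oU S).
Proof.
  assert (E : oU S = fun x => exists U, (fun U => exists V, S V /\ U = proj1_sig V) U /\ U x).
  { apply pred_ext. intros x. split.
    - intros [V [HV Hx]]. exists (proj1_sig V). eauto.
    - intros [U [[V [HV ->]] Hx]]. exists V. auto. }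
  rewrite E. apply open_union. intros U [V [_ ->]]. apply proj2_sig. Qed.

Lemma lub_Omega S j : is_lub (Omega C) S j -> forall x, proj1_sig j x <-> oU S x.
Proof. intros [H1 H2] x. split.
  - intros Hx. assert (Hle := H2 (exist _ (oU S) (oU_open S))). simpl in Hle.
    apply Hle; auto. intros s Hs y Hy. exists s; auto.
  - intros [V [HV Hx]]. apply (H1 V HV); auto. Qed.

Lemma lub_Omega' S (j : opens C) : (forall x, proj1_sig j x <-> oU S x) -> is_lub (Omega C) S j.
Proof. intros H. split.
  - intros s Hs x Hx. apply H. exists s; auto.
  - intros u Hu x Hx. apply H in Hx. destruct Hx as [V [HV Hx]]. apply (Hu V HV); auto. Qed.

Lemma meet_Omega a b m : is_meet (Omega C) a b m -> forall x, proj1_sig m x <-> proj1_sig a x /\ proj1_sig b x.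
Proof. intros [H1 [H2 H3]] x. split.
  - intros Hx. split; [apply H1|apply H2]; auto.
  - intros [Ha Hb]. set (I := fun y => proj1_sig a y /\ proj1_sig b y).
    assert (HI : tc_open C I) by (apply open_inter; apply proj2_sig).
    apply (H3 (exist _ I HI)); simpl; unfold I; [tauto|tauto|auto]. Qed.

Lemma meet_Omega' a b (m : opens C) : (forall x, proj1_sig m x <-> proj1_sig a x /\ proj1_sig b x) ->
  is_meet (Omega C) a b m.
Proof. intros H. split; [|split].
  - intros x Hx; apply H; auto.
  - intros x Hx; apply H; auto.
  - intros u H1 H2 x Hx. apply H. simpl in *. auto. Qed.

Definition empty_open : opens C := exist _ (fun _ => False) (tc_open_empty C).
Definition full_open : opens C := exist _ (fun _ => True) open_full.

Lemma pt_filter x : is_cpfilter (Omega C) (fun U => proj1_sig U x).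
Proof. split; [|split; [|split; [|split]]].
  - exists full_open. simpl. auto.
  - intros a b Ha Hab. apply Hab. auto.
  - intros a b m Ha Hb Hm. apply (meet_Omega a b m Hm). auto.
  - intros z Hz Hx. apply (Hz empty_open x Hx).
  - intros S j Hj Hx. apply (lub_Omega S j Hj) in Hx. destruct Hx as [V [HV Hx]]. eauto. Qed.

End OmegaGen.

Section Part2.
Variable Q : QF.
Variable P : q_car Q -> Prop.
Hypothesis HR : RQFP Q P.
Local Notation PI := P.
Ltac useG := let HH := fresh "HH" in pose proof HR as HH; dRQ HH.
Ltac appG L := useG; first [ solve [apply (L Q PI); auto] | solve [apply (L Q); auto] ].

Lemma chi_open a : tc_open (Ccat Q) (Xset Q a).
Proof. appG X_open. Qed.
Definition chiQ a : opens (Ccat Q) := exist _ (Xset Q a) (chi_open a).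
Lemma chi_surj (U : opens (Ccat Q)) : exists a, U = chiQ a.
Proof. useG. assert (Hex : exists a, proj1_sig U = Xset Q a) by (first [apply (open_X Q PI) | apply (open_X Q)]; auto; apply proj2_sig).
  destruct Hex as [a Ha].
  exists a. apply opens_eq. simpl. auto. Qed.
Lemma Xle2 a b A : q_le Q a b -> Xset Q a A -> Xset Q b A.
Proof. appG Xset_le. Qed.
Lemma Xmeet2 a b m A : is_meet Q a b m -> (Xset Q m A <-> Xset Q a A /\ Xset Q b A).
Proof. appG Xset_meet. Qed.
Lemma Xlub2 S j A : is_lub Q S j -> (Xset Q j A <-> exists s, S s /\ Xset Q s A).
Proof. appG Xset_lub. Qed.
Lemma Gmul2 a b Z : (exists A B : cpf Q, Xset Q a A /\ Xset Q b B /\ cpf_d Q A = cpf_r Q B /\ cpf_mul Q A B Z)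
  <-> Xset Q (q_mul Q a b) Z.
Proof. appG G_mul. Qed.
Lemma Gst2 a y : (exists x, Xset Q a x /\ y = cpf_d Q x) <-> Xset Q (q_star Q a) y.
Proof. appG G_st. Qed.
Lemma Gpl2 a y : (exists x, Xset Q a x /\ y = cpf_r Q x) <-> Xset Q (q_plus Q a) y.
Proof. appG G_pl. Qed.
Lemma cpfd2 A : proj1_sig (cpf_d Q A) = Dset Q (proj1_sig A).
Proof. appG cpf_d_eq. Qed.
Lemma cpfr2 A : proj1_sig (cpf_r Q A) = Rset Q (proj1_sig A).
Proof. appG cpf_r_eq. Qed.
Lemma filtM2 A B : is_cpfilter Q A -> is_cpfilter Q B -> Dset Q A = Rset Q B -> is_cpfilter Q (Mset Q A B).
Proof. appG filt_M. Qed.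

Lemma chi_eq a b : (forall A, Xset Q a A <-> Xset Q b A) -> chiQ a = chiQ b.
Proof. intros H. apply opens_eq. simpl. apply pred_ext. auto. Qed.

Lemma star_chi a : q_star (Omega (Ccat Q)) (chiQ a) = chiQ (q_star Q a).
Proof. apply opens_eq. simpl. rewrite (mkopen_eq (Ccat Q)).
  - apply pred_ext. intros y. apply Gst2.
  - replace (fun y : cpf Q => exists x : cpf Q, Xset Q a x /\ y = cpf_d Q x) with (Xset Q (q_star Q a)).
    + apply chi_open.
    + apply pred_ext. intros y. symmetry. apply Gst2. Qed.
Lemma plus_chi a : q_plus (Omega (Ccat Q)) (chiQ a) = chiQ (q_plus Q a).
Proof. apply opens_eq. simpl. rewrite (mkopen_eq (Ccat Q)).
  - apply pred_ext. intros y. apply Gpl2.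
  - replace (fun y : cpf Q => exists x : cpf Q, Xset Q a x /\ y = cpf_r Q x) with (Xset Q (q_plus Q a)).
    + apply chi_open.
    + apply pred_ext. intros y. symmetry. apply Gpl2. Qed.
Lemma mul_chi a b : q_mul (Omega (Ccat Q)) (chiQ a) (chiQ b) = chiQ (q_mul Q a b).
Proof. apply opens_eq. simpl.
  assert (E : (fun z : cpf Q => exists u v : cpf Q, Xset Q a u /\ Xset Q b v /\
        cpf_d Q u = cpf_r Q v /\ cpf_mul Q u v z) = Xset Q (q_mul Q a b)).
  { apply pred_ext. intros z. apply Gmul2. }
  rewrite E. apply (mkopen_eq (Ccat Q)). apply chi_open. Qed.

Definition omx (x : cpf Q) : cpf (Omega (Ccat Q)) :=
  exist _ (fun U : opens (Ccat Q) => proj1_sig U x) (pt_filter (Ccat Q) x).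

Lemma om_inj x y : omx x = omx y -> x = y.
Proof. intros H. apply (f_equal (@proj1_sig _ _)) in H. simpl in H.
  useG. apply (cpf_eq Q). apply pred_ext. intros a.
  pose proof (equal_f H (chiQ a)) as E. simpl in E. unfold Xset in E. rewrite E. tauto. Qed.

Lemma om_surj (y : cpf (Omega (Ccat Q))) : exists x, omx x = y.
Proof. destruct y as [Y HY].
  set (A := fun a => Y (chiQ a)).
  assert (HA : is_cpfilter Q A).
  { split; [|split; [|split; [|split]]].
    - destruct (f_ne _ Y HY) as [U HU]. destruct (chi_surj U) as [a ->]. exists a. auto.
    - intros a b Ha Hab. apply (f_up _ Y HY (chiQ a)); auto. intros x Hx. simpl in *. eapply Xle2; eauto.
    - intros a b m Ha Hb Hm. destruct HY as [_ [_ [HM _]]]. apply (HM (chiQ a) (chiQ b)); auto.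
      apply meet_Omega'. intros x. simpl. apply Xmeet2; auto.
    - intros z Hz Hza. apply (f_nbot _ Y HY (chiQ z) Hza).
      intros u x Hx. simpl in Hx. exfalso. destruct x as [X HX]. unfold Xset in Hx; simpl in Hx.
      apply (f_nbot Q X HX z Hx). exact Hz.
    - intros S j Hj Hja.
      assert (HL : is_lub (Omega (Ccat Q)) (fun U => exists s, S s /\ U = chiQ s) (chiQ j)).
      { apply lub_Omega'. intros x. simpl. rewrite (Xlub2 S j x Hj). split.
        - intros [s [Hs Hx]]. exists (chiQ s). eauto.
        - intros [V [[s [Hs ->]] Hx]]. eauto. }
      destruct (f_cp _ Y HY _ _ HL Hja) as [U [[s [Hs ->]] HU]]. eauto. }
  exists (exist _ A HA). apply (cpf_eq (Omega (Ccat Q))). simpl. apply pred_ext. intros U.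
  destruct (chi_surj U) as [a ->]. simpl. unfold Xset; simpl. unfold A. tauto. Qed.

Lemma om_d x : omx (cpf_d Q x) = cpf_d (Omega (Ccat Q)) (omx x).
Proof.
  assert (E : upclose (Omega (Ccat Q)) (fun y => exists a, proj1_sig (omx x) a /\ y = q_star (Omega (Ccat Q)) a)
      = proj1_sig (omx (cpf_d Q x))).
  { apply pred_ext. intros V. destruct (chi_surj V) as [c ->]. unfold upclose. split.
    - intros [W [[U [HU ->]] HW]]. destruct (chi_surj U) as [a ->].
      rewrite star_chi in HW. simpl in HW, HU. apply HW. apply Gst2. eauto.
    - intros Hc. simpl in Hc. unfold Xset in Hc. rewrite cpfd2 in Hc. destruct Hc as [w [[a [Ha ->]] Hc]].
      exists (q_star (Omega (Ccat Q)) (chiQ a)). split; [exists (chiQ a); auto|].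
      rewrite star_chi. intros z Hz. simpl in *. eapply Xle2; eauto. }
  unfold cpf_d at 2, mkcpf. destruct excluded_middle_informative as [H|H].
  - apply (cpf_eq (Omega (Ccat Q))). exact (eq_sym E).
  - exfalso. apply H. rewrite E. apply proj2_sig. Qed.

Lemma om_r x : omx (cpf_r Q x) = cpf_r (Omega (Ccat Q)) (omx x).
Proof.
  assert (E : upclose (Omega (Ccat Q)) (fun y => exists a, proj1_sig (omx x) a /\ y = q_plus (Omega (Ccat Q)) a)
      = proj1_sig (omx (cpf_r Q x))).
  { apply pred_ext. intros V. destruct (chi_surj V) as [c ->]. unfold upclose. split.
    - intros [W [[U [HU ->]] HW]]. destruct (chi_surj U) as [a ->].
      rewrite plus_chi in HW. simpl in HW, HU. apply HW. apply Gpl2. eauto.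
    - intros Hc. simpl in Hc. unfold Xset in Hc. rewrite cpfr2 in Hc. destruct Hc as [w [[a [Ha ->]] Hc]].
      exists (q_plus (Omega (Ccat Q)) (chiQ a)). split; [exists (chiQ a); auto|].
      rewrite plus_chi. intros z Hz. simpl in *. eapply Xle2; eauto. }
  unfold cpf_r at 2, mkcpf. destruct excluded_middle_informative as [H|H].
  - apply (cpf_eq (Omega (Ccat Q))). exact (eq_sym E).
  - exfalso. apply H. rewrite E. apply proj2_sig. Qed.


Lemma lubP2 a : is_lub Q (lubPset Q PI a) a.
Proof. appG lubP. Qed.
Lemma lubPset_P2 a s : lubPset Q PI a s -> PI s /\ q_le Q s a.
Proof. appG lubPset_P. Qed.
Lemma meet_ex2 a b : exists m, is_meet Q a b m.
Proof. appG meet_ex. Qed.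

Lemma om_mul x y z : cpf_mul Q x y z <-> cpf_mul (Omega (Ccat Q)) (omx x) (omx y) (omx z).
Proof. split.
  - intros [Hdr HZ]. split.
    + rewrite <- om_d, <- om_r, Hdr. auto.
    + apply pred_ext. intros V. destruct (chi_surj V) as [c ->]. split.
      * intros Hc. change (proj1_sig z c) in Hc. rewrite HZ in Hc.
        destruct Hc as [w [[a [b [Ha [Hb ->]]]] Hw]]. exists (chiQ (q_mul Q a b)). split.
        -- exists (chiQ a), (chiQ b). split; [exact Ha|split; [exact Hb| symmetry; apply mul_chi]].
        -- intros u Hu. eapply Xle2; eauto.
      * intros [W [[U [V [HU [HV ->]]]] HW]]. destruct (chi_surj U) as [a ->].
        destruct (chi_surj V) as [b ->]. rewrite mul_chi in HW. apply HW.
        apply Gmul2. exists x, y. split; [exact HU|split; [exact HV|split; [exact Hdr|split; auto]]].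
  - intros [Hdr HZ]. rewrite <- om_d, <- om_r in Hdr. apply om_inj in Hdr. split; auto.
    assert (HDR : Dset Q (proj1_sig x) = Rset Q (proj1_sig y)).
    { rewrite <- cpfd2, <- cpfr2, Hdr. auto. }
    set (W := exist _ (Mset Q (proj1_sig x) (proj1_sig y))
              (filtM2 _ _ (proj2_sig x) (proj2_sig y) HDR) : cpf Q).
    apply pred_ext. intros q. split.
    + intros Hq. assert (H1 : proj1_sig (omx z) (chiQ q)) by exact Hq. rewrite HZ in H1.
      destruct H1 as [W' [[U [V [HU [HV ->]]]] HW]].
      destruct (chi_surj U) as [a ->]. destruct (chi_surj V) as [b ->].
      rewrite mul_chi in HW.
      assert (HWab : Xset Q (q_mul Q a b) W).
      { apply Gmul2. exists x, y. split; [exact HU|split; [exact HV|split; [exact Hdr|split; auto]]]. }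
      exact (HW W HWab).
    + intros Hq. change (proj1_sig (omx z) (chiQ q)). rewrite HZ.
      destruct Hq as [w [[a [b [Ha [Hb ->]]]] Hw]]. exists (chiQ (q_mul Q a b)). split.
      * exists (chiQ a), (chiQ b). split; [exact Ha|split; [exact Hb| symmetry; apply mul_chi]].
      * intros u Hu. eapply Xle2; eauto.
Qed.

Lemma om_cont V : tc_open (Ccat (Omega (Ccat Q))) V -> tc_open (Ccat Q) (fun x => V (omx x)).
Proof. intros HV. apply (HV (fun V => tc_open (Ccat Q) (fun x => V (omx x)))).
  - split; [|split].
    + intros F HF.
      refine (open_ext (Ccat Q) _ _ _ (open_union (Ccat Q) (fun W => exists U, F U /\ W = fun x => U (omx x)) _)).
      * intros x. split.
        -- intros [W [[U [HU ->]] Hx]]. eauto.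
        -- intros [U [HU Hx]]. exists (fun x => U (omx x)). eauto.
      * intros W [U [HU ->]]. auto.
    + intros U V' HU HV'. exact (open_inter (Ccat Q) _ _ HU HV').
    + exact (open_full (Ccat Q)).
  - intros U [a [Ha ->]]. exact (proj2_sig a).
Qed.

Lemma chiQ_PI s : PI s -> partial_isometry (Omega (Ccat Q)) (chiQ s).
Proof. intros Ps b Hb. destruct (chi_surj b) as [c ->].
  destruct (meet_ex2 c s) as [m Hm].
  assert (E : chiQ c = chiQ m).
  { apply chi_eq. intros A. rewrite (Xmeet2 c s m A Hm). split; [|tauto].
    intros H. split; auto. apply Hb. exact H. }
  rewrite E, plus_chi, star_chi, !mul_chi.
  assert (Hms : q_le Q m s) by (destruct Hm as [_ [? _]]; auto).
  assert (PIs : partial_isometry Q s) by (pose proof HR as HH; dRQ HH; auto).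
  split; f_equal; apply (PIs m Hms). Qed.

Lemma om_open U : tc_open (Ccat Q) U ->
  tc_open (Ccat (Omega (Ccat Q))) (fun y => exists x, U x /\ y = omx x).
Proof. intros HU. destruct (chi_surj (exist _ U HU)) as [a Ha].
  apply (f_equal (@proj1_sig _ _)) in Ha. simpl in Ha. subst U.
  refine (open_ext (Ccat (Omega (Ccat Q))) _ _ _ (open_union (Ccat (Omega (Ccat Q))) (fun W => exists s, lubPset Q PI a s /\ W = Xset (Omega (Ccat Q)) (chiQ s)) _)).
  { intros y. split.
    - intros [W [[s [Hs ->]] Hy]]. destruct (om_surj y) as [x <-]. exists x. split; auto.
      apply (Xle2 s a); [apply (lubPset_P2 a s Hs)| exact Hy].
    - intros [x [Hx ->]]. apply (Xlub2 _ _ x (lubP2 a)) in Hx. destruct Hx as [s [Hs Hx]].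
      exists (Xset (Omega (Ccat Q)) (chiQ s)). split; [eauto|exact Hx]. }
  intros W [s [Hs ->]]. apply gen_basic.
  exists (chiQ s). split; auto. apply chiQ_PI. apply (lubPset_P2 a s Hs). Qed.

Lemma Ge2 A : cpf_d Q A = A <-> Xset Q (q_e Q) A.
Proof. appG G_e. Qed.

Lemma e_chi : q_e (Omega (Ccat Q)) = chiQ (q_e Q).
Proof. apply opens_eq. simpl.
  assert (E : (fun x : cpf Q => cpf_d Q x = x) = Xset Q (q_e Q)).
  { apply pred_ext. intros z. apply Ge2. }
  rewrite E. apply (mkopen_eq (Ccat Q)). apply chi_open. Qed.

Lemma spatial_of_sep : (forall a b, (forall A : cpf Q, Xset Q a A -> Xset Q b A) -> q_le Q a b) -> spatial Q.
Proof. intros Hsep. pose proof HR as HH; dRQ HH. exists chiQ. split; [reflexivity|].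
  split; [|split; [|split; [|split; [|split; [|split]]]]].
  - intros a b H. apply (f_equal (@proj1_sig _ _)) in H. simpl in H.
    apply H3; apply Hsep; intros A; rewrite H; auto.
  - intros y. destruct (chi_surj y) as [a ->]. eauto.
  - intros a b. split.
    + intros Hab A HA. simpl in *. eapply Xle2; eauto.
    + intros Hab. apply Hsep. intros A HA. apply (Hab A HA).
  - intros a b. symmetry. apply mul_chi.
  - symmetry. apply e_chi.
  - intros a. symmetry. apply star_chi.
  - intros a. symmetry. apply plus_chi.
Qed.

End Part2.

Theorem part2 : forall Q : QF, is_RQF Q -> sober (Ccat Q).
Proof. intros Q HQ0. pose proof (RQF_RQFP Q HQ0) as HQ. exists (omx Q). split; [intros; reflexivity|]. split.
  - split; [|split; [|split; [|split]]].
    + apply (om_inj Q _ HQ).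
    + first [apply (om_surj Q _ HQ) | apply (om_surj Q)].
    + intros x. first [apply (om_d Q _ HQ) | apply (om_d Q)].
    + intros x. first [apply (om_r Q _ HQ) | apply (om_r Q)].
    + intros x y z. first [apply (om_mul Q _ HQ) | apply (om_mul Q)].
  - split; [|split; [|split]].
    + apply (om_inj Q _ HQ).
    + first [apply (om_surj Q _ HQ) | apply (om_surj Q)].
    + first [apply (om_cont Q _ HQ) | apply (om_cont Q)].
    + first [apply (om_open Q _ HQ) | apply (om_open Q)].
Qed.

Section Part1.
Variable C : TopCat.
Hypothesis HC : is_etale C.
Local Notation d := (tc_d C).
Local Notation r := (tc_r C).
Local Notation m := (tc_mul C).
Local Notation op := (tc_open C).

Lemma cat1 x : d (d x) = d x /\ r (d x) = d x /\ d (r x) = r x /\ r (r x) = r x.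
Proof. destruct HC as [[H _] _]. apply H. Qed.
Lemma cat2 x y z : m x y z -> d x = r y.
Proof. destruct HC as [[_ [H _]] _]. apply H. Qed.
Lemma cat3 x y : d x = r y -> exists z, m x y z.
Proof. destruct HC as [[_ [_ [H _]]] _]. apply H. Qed.
Lemma cat4 x y z z' : m x y z -> m x y z' -> z = z'.
Proof. destruct HC as [[_ [_ [_ [H _]]]] _]. apply H. Qed.
Lemma cat5 x y z : m x y z -> d z = d y /\ r z = r x.
Proof. destruct HC as [[_ [_ [_ [_ [H _]]]]] _]. apply H. Qed.
Lemma cat6 x : m x (d x) x /\ m (r x) x x.
Proof. destruct HC as [[_ [_ [_ [_ [_ [H _]]]]]] _]. apply H. Qed.
Lemma cat7 x y w u v : m x y u -> m u w v -> exists t, m y w t /\ m x t v.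
Proof. destruct HC as [[_ [_ [_ [_ [_ [_ [H _]]]]]]] _]. apply H. Qed.
Lemma cat8 x y w t v : m y w t -> m x t v -> exists u, m x y u /\ m u w v.
Proof. destruct HC as [[_ [_ [_ [_ [_ [_ [_ H]]]]]]] _]. apply H. Qed.
Lemma d_cont : tc_continuous C d.
Proof. apply HC. Qed.
Lemma r_cont : tc_continuous C r.
Proof. apply HC. Qed.
Lemma m_cont : tc_mul_continuous C.
Proof. apply HC. Qed.
Lemma d_lh : tc_local_homeo C d.
Proof. apply HC. Qed.
Lemma r_lh : tc_local_homeo C r.
Proof. apply HC. Qed.

Lemma m_id_l u z : m (r u) u z -> z = u.
Proof. intros H. apply (cat4 _ _ _ _ H (proj2 (cat6 u))). Qed.
Lemma m_id_r u z : m u (d u) z -> z = u.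
Proof. intros H. apply (cat4 _ _ _ _ H (proj1 (cat6 u))). Qed.

Definition image (f : tc_car C -> tc_car C) (U : tc_car C -> Prop) := fun y => exists x, U x /\ y = f x.
Definition smul (U V : tc_car C -> Prop) :=
  fun z => exists u v, U u /\ V v /\ d u = r v /\ m u v z.
Definition E0 := fun x => d x = x.

Lemma image_open f U : tc_local_homeo C f -> op U -> op (image f U).
Proof. intros [_ Hf] HU.
  refine (open_ext C _ _ _ (open_union C (fun W => exists x N, U x /\ op N /\ N x /\
     (forall V, op V -> (forall y, V y -> N y) -> op (image f V)) /\ W = image f (fun y => U y /\ N y)) _)).
  - intros y. split.
    + intros [W [[x [N [Hx [HN [Nx [Hi ->]]]]]] [x' [[Ux' _] ->]]]]. exists x'. auto.
    + intros [x' [Ux' ->]]. destruct (Hf x') as [N [HN [Nx [_ Hi]]]].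
      exists (image f (fun y => U y /\ N y)). split.
      * exists x', N. auto.
      * exists x'. auto.
  - intros W [x [N [Hx [HN [Nx [Hi ->]]]]]]. apply Hi.
    + apply open_inter; auto.
    + intros y [_ Hy]; auto.
Qed.

Lemma open_local S : (forall z, S z -> exists N, op N /\ N z /\ forall w, N w -> S w) -> op S.
Proof. intros H.
  refine (open_ext C _ _ _ (open_union C (fun N => op N /\ forall w, N w -> S w) _)).
  - intros z. split.
    + intros [N [[_ HN] Hz]]. auto.
    + intros Hz. destruct (H z Hz) as [N [HN [Nz HNS]]]. exists N. auto.
  - intros N [HN _]; auto.
Qed.

Lemma smul_open U V : op U -> op V -> op (smul U V).
Proof. intros HU HV. apply open_local. intros z [u [v [Uu [Vv [Hdr Hm]]]]].
  destruct (proj2 d_lh z) as [W [HW [Wz [Winj _]]]].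
  destruct (m_cont W HW u v z Hm Wz) as [U1 [V1 [HU1 [HV1 [U1u [V1v H1]]]]]].
  set (U2 := fun y => U y /\ U1 y). set (V2 := fun y => V y /\ V1 y).
  assert (HU2 : op U2) by (apply open_inter; auto).
  assert (HV2 : op V2) by (apply open_inter; auto).
  set (V3 := fun y => V2 y /\ image d U2 (r y)).
  assert (HV3 : op V3).
  { apply open_inter; auto. apply (r_cont (image d U2)). apply image_open; auto. apply d_lh. }
  exists (fun w => W w /\ image d V3 (d w)). split; [|split].
  - apply open_inter; auto. apply (d_cont (image d V3)). apply image_open; auto. apply d_lh.
  - split; auto. exists v. split.
    + split; [split; auto|]. exists u. split; [split; auto| auto].
    + apply (cat5 _ _ _ Hm).
  - intros w [Ww [v' [[[Vv' V1v'] [u' [[Uu' U1u'] Hru']]] Hdw]]].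
    destruct (cat3 u' v' (eq_sym Hru')) as [w' Hw'].
    assert (Ww' : W w') by (apply (H1 u' v' w'); auto).
    assert (E : w = w').
    { apply Winj; auto. rewrite Hdw. symmetry. apply (cat5 _ _ _ Hw'). }
    subst w'. exists u', v'. split; [|split; [|split]]; auto.
Qed.

Lemma E0_open : op E0.
Proof. refine (open_ext C (image d (fun _ => True)) _ _ (image_open d _ d_lh (open_full C))).
  intros x. split.
  - intros [y [_ ->]]. unfold E0. apply cat1.
  - intros Hx. exists x. split; auto. Qed.

Local Notation O := (Omega C).

Lemma oeq (U V : opens C) : (forall x, proj1_sig U x <-> proj1_sig V x) -> U = V.
Proof. intros H. apply opens_eq. apply pred_ext. auto. Qed.

Lemma pm (U V : opens C) : proj1_sig (q_mul O U V) = smul (proj1_sig U) (proj1_sig V).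
Proof. exact (mkopen_eq C _ (smul_open _ _ (proj2_sig U) (proj2_sig V))). Qed.
Lemma pst (U : opens C) : proj1_sig (q_star O U) = image d (proj1_sig U).
Proof. exact (mkopen_eq C _ (image_open d _ d_lh (proj2_sig U))). Qed.
Lemma ppl (U : opens C) : proj1_sig (q_plus O U) = image r (proj1_sig U).
Proof. exact (mkopen_eq C _ (image_open r _ r_lh (proj2_sig U))). Qed.
Lemma pe : proj1_sig (q_e O) = E0.
Proof. exact (mkopen_eq C _ E0_open). Qed.

Definition bis (U : opens C) : Prop :=
  (forall x y, proj1_sig U x -> proj1_sig U y -> d x = d y -> x = y) /\
  (forall x y, proj1_sig U x -> proj1_sig U y -> r x = r y -> x = y).

Lemma id_r x : r x = x -> d x = x.
Proof. intros H. rewrite <- H. apply cat1. Qed.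
Lemma id_d x : d x = x -> r x = x.
Proof. intros H. rewrite <- H. apply cat1. Qed.

Lemma Omega_RQFP : RQFP O bis.
Proof.
  split; [|split; [|split; [|split; [|split; [|split; [|split; [|split; [|split; [|split; [|split; [|split; [|split; [|split; [|split; [|split; [|split]]]]]]]]]]]]]]]].
  - intros a x; auto.
  - intros a b c H1 H2 x Hx; auto.
  - intros a b H1 H2. apply oeq. intros x; split; auto.
  - intros S. exists (exist _ (oU C S) (oU_open C S)). apply lub_Omega'. intros x; simpl; tauto.
  - intros a S j mm Hj Hm. apply lub_Omega'. intros x.
    rewrite (meet_Omega C a j mm Hm x), (lub_Omega C S j Hj x). split.
    + intros [Ha [V [HV Hx]]].
      exists (exist _ (fun y => proj1_sig a y /\ proj1_sig V y) (open_inter C _ _ (proj2_sig a) (proj2_sig V))).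
      split; [|simpl; auto]. exists V. split; auto. apply meet_Omega'. intros y; simpl; tauto.
    + intros [V [[s [Hs HV]] Hx]]. rewrite (meet_Omega C a s V HV x) in Hx. destruct Hx as [Ha Hs'].
      split; auto. exists s; auto.
  - intros a b c. apply oeq. intros z. rewrite !pm. split.
    + intros [p [w [Hp [Hw [Hpw Hm]]]]]. try rewrite pm in Hp. destruct Hp as [u [v [Hu [Hv [Huv Hm']]]]].
      destruct (cat7 _ _ _ _ _ Hm' Hm) as [t [Ht1 Ht2]].
      exists u, t. split; [auto|split; [|split; [apply (cat2 _ _ _ Ht2)|auto]]].
      try rewrite pm. exists v, w. split; [auto|split; [auto|split; [apply (cat2 _ _ _ Ht1)|auto]]].
    + intros [u [t [Hu [Ht [Hut Hm]]]]]. try rewrite pm in Ht. destruct Ht as [v [w [Hv [Hw [Hvw Hm']]]]].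
      destruct (cat8 _ _ _ _ _ Hm' Hm) as [p [Hp1 Hp2]].
      exists p, w. split; [|split; [auto|split; [apply (cat2 _ _ _ Hp2)|auto]]].
      try rewrite pm. exists u, v. split; [auto|split; [auto|split; [apply (cat2 _ _ _ Hp1)|auto]]].
  - intros a. split; apply oeq; intros z; rewrite pm; try rewrite pe; split.
    + intros [p [u [Hp [Hu [Hpu Hm]]]]]. unfold E0 in Hp. rewrite Hp in Hpu. subst p.
      rewrite (m_id_l _ _ Hm). auto.
    + intros Hz. exists (r z), z. split; [apply cat1|split; [auto|split; [apply cat1|apply cat6]]].
    + intros [u [p [Hu [Hp [Hup Hm]]]]]. unfold E0 in Hp. rewrite (id_d p Hp) in Hup. subst p.
      rewrite (m_id_r _ _ Hm). auto.
    + intros Hz. exists z, (d z). split; [auto|split; [apply cat1|split; [symmetry; apply cat1|apply cat6]]].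
  - intros a S j Hj. split; apply lub_Omega'; intros x; rewrite pm; split.
    + intros [u [v [Hu [Hv [Huv Hm]]]]]. apply (lub_Omega C S j Hj) in Hv. destruct Hv as [s [Hs Hv]].
      exists (q_mul O a s). split; [exists s; auto|]. rewrite pm. exists u, v. auto.
    + intros [V [[s [Hs ->]] Hx]]. rewrite pm in Hx. destruct Hx as [u [v [Hu [Hv [Huv Hm]]]]].
      exists u, v. split; [auto|split; [|auto]]. apply (lub_Omega C S j Hj). exists s; auto.
    + intros [u [v [Hu [Hv [Huv Hm]]]]]. apply (lub_Omega C S j Hj) in Hu. destruct Hu as [s [Hs Hu]].
      exists (q_mul O s a). split; [exists s; auto|]. rewrite pm. exists u, v. auto.
    + intros [V [[s [Hs ->]] Hx]]. rewrite pm in Hx. destruct Hx as [u [v [Hu [Hv [Huv Hm]]]]].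
      exists u, v. split; [|auto]. apply (lub_Omega C S j Hj). exists s; auto.
  - intros S j Hj. split; apply lub_Omega'; intros x; [rewrite pst|rewrite ppl]; split.
    + intros [y [Hy ->]]. apply (lub_Omega C S j Hj) in Hy. destruct Hy as [s [Hs Hy]].
      exists (q_star O s). split; [exists s; auto|]. rewrite pst. exists y; auto.
    + intros [V [[s [Hs ->]] Hx]]. rewrite pst in Hx. destruct Hx as [y [Hy ->]].
      exists y. split; auto. apply (lub_Omega C S j Hj). exists s; auto.
    + intros [y [Hy ->]]. apply (lub_Omega C S j Hj) in Hy. destruct Hy as [s [Hs Hy]].
      exists (q_plus O s). split; [exists s; auto|]. rewrite ppl. exists y; auto.
    + intros [V [[s [Hs ->]] Hx]]. rewrite ppl in Hx. destruct Hx as [y [Hy ->]].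
      exists y. split; auto. apply (lub_Omega C S j Hj). exists s; auto.
  - intros a. split; intros x Hx; [rewrite pst in Hx|rewrite ppl in Hx]; rewrite pe;
      destruct Hx as [y [Hy ->]]; unfold E0; apply cat1.
  - intros p Hp. assert (Hp' : forall x, proj1_sig p x -> d x = x) by (intros x Hx; pose proof (Hp x Hx) as Hpx; rewrite pe in Hpx; exact Hpx).
    split; apply oeq; intros x; [rewrite pst|rewrite ppl]; split.
    + intros [y [Hy ->]]. rewrite (Hp' y Hy). auto.
    + intros Hx. exists x. split; auto. symmetry; auto.
    + intros [y [Hy ->]]. rewrite (id_d y (Hp' y Hy)). auto.
    + intros Hx. exists x. split; auto. symmetry; apply id_d; auto.
  - intros p q Hp Hq.
    assert (Hp' : forall x, proj1_sig p x -> d x = x) by (intros x Hx; pose proof (Hp x Hx) as Hpx; rewrite pe in Hpx; exact Hpx).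
    assert (Hq' : forall x, proj1_sig q x -> d x = x) by (intros x Hx; pose proof (Hq x Hx) as Hpx; rewrite pe in Hpx; exact Hpx).
    assert (K : forall p q : opens C, (forall x, proj1_sig p x -> d x = x) -> (forall x, proj1_sig q x -> d x = x) ->
       forall z, proj1_sig (q_mul O p q) z <-> proj1_sig p z /\ proj1_sig q z).
    { intros p0 q0 Hp0 Hq0 z. rewrite pm. split.
      - intros [u [v [Hu [Hv [Huv Hm]]]]].
        rewrite (Hp0 u Hu), (id_d v (Hq0 v Hv)) in Huv. subst v.
        rewrite <- (id_d u (Hp0 u Hu)) in Hm at 1. rewrite (m_id_l _ _ Hm). auto.
      - intros [H1 H2]. exists z, z. split; [auto|split; [auto|split]].
        + rewrite (Hp0 z H1), (id_d z (Hp0 z H1)). auto.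
        + pose proof (proj2 (cat6 z)) as H. rewrite (id_d z (Hp0 z H1)) in H. auto. }
    split; [|split].
    + intros z Hz. rewrite pe. apply K in Hz; auto. apply Hp'. tauto.
    + apply oeq. intros z. rewrite (K p q Hp' Hq'), (K q p Hq' Hp'). tauto.
    + apply oeq. intros z. rewrite (K p p Hp' Hp'). tauto.
  - intros a. split; apply oeq; intros z; rewrite pm; [rewrite pst|rewrite ppl]; split.
    + intros [u [p [Hu [[x [Hx ->]] [Hup Hm]]]]]. rewrite (proj1 (proj2 (cat1 x))) in Hup.
      rewrite <- Hup in Hm. rewrite (m_id_r _ _ Hm). auto.
    + intros Hz. exists z, (d z). split; [auto|split; [exists z; auto|split; [symmetry; apply cat1|apply cat6]]].
    + intros [p [u [[x [Hx ->]] [Hu [Hpu Hm]]]]]. rewrite (proj1 (proj2 (proj2 (cat1 x)))) in Hpu.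
      rewrite Hpu in Hm. rewrite (m_id_l _ _ Hm). auto.
    + intros Hz. exists (r z), z. split; [exists z; auto|split; [auto|split; [apply cat1|apply cat6]]].
  - intros a b. split; apply oeq; intros y; [rewrite !pst|rewrite !ppl]; split.
    + intros [z [Hz ->]]. rewrite pm in Hz. destruct Hz as [u [v [Hu [Hv [Huv Hm]]]]].
      exists v. split; [|first [apply (proj1 (cat5 _ _ _ Hm)) | apply (proj2 (cat5 _ _ _ Hm))]].
      rewrite pm. exists (d u), v. split; [rewrite pst; exists u; auto|split; [auto|split]].
      * rewrite (proj1 (cat1 u)). auto.
      * rewrite Huv. apply cat6.
    + intros [z [Hz ->]]. rewrite pm in Hz. destruct Hz as [p [v [Hp [Hv [Hpv Hm]]]]].
      rewrite pst in Hp. destruct Hp as [u [Hu ->]]. rewrite (proj1 (cat1 u)) in Hpv.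
      rewrite Hpv in Hm. rewrite (m_id_l _ _ Hm).
      destruct (cat3 u v Hpv) as [w Hw]. exists w. split.
      * rewrite pm. exists u, v. auto.
      * symmetry. first [apply (proj1 (cat5 _ _ _ Hw)) | apply (proj2 (cat5 _ _ _ Hw))].
    + intros [z [Hz ->]]. rewrite pm in Hz. destruct Hz as [u [v [Hu [Hv [Huv Hm]]]]].
      exists u. split; [|first [apply (proj1 (cat5 _ _ _ Hm)) | apply (proj2 (cat5 _ _ _ Hm))]].
      rewrite pm. exists u, (r v). split; [auto|split; [rewrite ppl; exists v; auto|split]].
      * rewrite (proj2 (proj2 (proj2 (cat1 v)))). auto.
      * rewrite <- Huv. apply cat6.
    + intros [z [Hz ->]]. rewrite pm in Hz. destruct Hz as [u [p [Hu [Hp [Hup Hm]]]]].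
      rewrite ppl in Hp. destruct Hp as [v [Hv ->]]. rewrite (proj2 (proj2 (proj2 (cat1 v)))) in Hup.
      rewrite <- Hup in Hm. rewrite (m_id_r _ _ Hm).
      destruct (cat3 u v Hup) as [w Hw]. exists w. split.
      * rewrite pm. exists u, v. auto.
      * symmetry. first [apply (proj1 (cat5 _ _ _ Hw)) | apply (proj2 (cat5 _ _ _ Hw))].
  - intros a [Hd Hr] b Hb. split; apply oeq; intros z; rewrite pm; [rewrite ppl|rewrite pst]; split.
    + intros Hz. exists (r z), z. split; [exists z; auto|split; [apply Hb; auto|split; [apply cat1|apply cat6]]].
    + intros [p [u [[v [Hv ->]] [Hu [Hpu Hm]]]]]. rewrite (proj1 (proj2 (proj2 (cat1 v)))) in Hpu.
      assert (E : v = u) by (apply Hr; auto; apply Hb; auto). subst u.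
      rewrite (m_id_l _ _ Hm). auto.
    + intros Hz. exists z, (d z). split; [apply Hb; auto|split; [exists z; auto|split; [symmetry; apply cat1|apply cat6]]].
    + intros [u [p [Hu [[v [Hv ->]] [Hup Hm]]]]]. rewrite (proj1 (proj2 (cat1 v))) in Hup.
      assert (E : u = v) by (apply Hd; auto; apply Hb; auto). subst u.
      rewrite (m_id_r _ _ Hm). auto.
  - intros a b [Hd Hr] Hb. split; intros x y Hx Hy H; [apply Hd|apply Hr]; auto.
  - intros a b [Hda Hra] [Hdb Hrb]. split; intros w w'; rewrite pm;
      intros [u [v [Hu [Hv [Huv Hm]]]]] [u' [v' [Hu' [Hv' [Huv' Hm']]]]] H.
    + rewrite (proj1 (cat5 _ _ _ Hm)), (proj1 (cat5 _ _ _ Hm')) in H.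
      assert (E : v = v') by auto. subst v'.
      assert (E : u = u') by (apply Hda; auto; congruence). subst u'.
      apply (cat4 _ _ _ _ Hm Hm').
    + rewrite (proj2 (cat5 _ _ _ Hm)), (proj2 (cat5 _ _ _ Hm')) in H.
      assert (E : u = u') by auto. subst u'.
      assert (E : v = v') by (apply Hrb; auto; congruence). subst v'.
      apply (cat4 _ _ _ _ Hm Hm').
  - intros t Ht. apply lub_Omega'. intros x. split.
    + intros _. destruct (proj2 d_lh x) as [W1 [HW1 [W1x [W1i _]]]].
      destruct (proj2 r_lh x) as [W2 [HW2 [W2x [W2i _]]]].
      exists (exist _ (fun y => W1 y /\ W2 y) (open_inter C _ _ HW1 HW2)). simpl. split; [|auto].
      split; simpl; intros y z [Hy1 Hy2] [Hz1 Hz2] H; auto.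
    + intros _. apply (Ht (full_open C)). simpl. auto.
Qed.

Lemma Omega_sep : forall a b, (forall A : cpf O, Xset O a A -> Xset O b A) -> q_le O a b.
Proof. intros a b H x Hx. apply (H (exist _ (fun U : opens C => proj1_sig U x) (pt_filter C x))). exact Hx. Qed.

Theorem part1 : spatial O.
Proof. apply (spatial_of_sep O bis Omega_RQFP). apply Omega_sep. Qed.

End Part1.

Theorem mainTheorem17 :
  (forall C : TopCat, is_etale C -> spatial (Omega C)) /\
  (forall Q : QF, is_RQF Q -> sober (Ccat Q)).
Proof. split.
  - intros C HC. apply (part1 C HC).
  - exact part2.
Qed.
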